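(* Let $Q_1=(0,1)^2$, $Q_2=(-1,0)\times(0,1)$, $Q_3=(-1,0)^2$, $Q_4=(0,1)\times(-1,0)$. Let $g:\bigcup_{i=1}^4Q_i\to\mathbb{R}^2$ satisfy: (a) $g|_{Q_i}=P_i$ for polynomial maps $P_i:\mathbb{R}^2\to\mathbb{R}^2$ of degree at most two; (b) $g$ is $C^1$ across all coordinate interfaces, i.e. $g$ extends to a $C^1$ map on $(-1,1)^2$; (c) $\det Dg\geq\lambda>0$ on $\bigcup_iQ_i$. Fix a radial $\chi\in C_c^\infty(B_1(0))$ with $0\leq\chi\leq1$ and $\chi\equiv1$ on $B_{1/2}(0)$, set $\chi_\varepsilon(x)=\chi(x/\varepsilon)$, $P_*:=P_1$, and for $0<\varepsilon<1$ define \[ g_\varepsilon(x)=\begin{cases}P_*(x)+(1-\chi_\varepsilon(x))\bigl(g(x)-P_*(x)\bigr), & |x|<\varepsilon,\\ g(x), & |x|\geq\varepsilon.\end{cases} \] Then: (i) $g_\varepsilon$ is $C^1$ on $\bigcup_iQ_i$, indeed $C^1$ across the coordinate interfaces, and $g_\varepsilon\in C^\infty$ inside each $Q_i$; (ii) $g_\varepsilon=P_*$ on $B_{\varepsilon/2}(0)$ and $g_\varepsilon=g$ outside $B_\varepsilon(0)$; (iii) $g_\varepsilon\to g$ in $W^{2,1}(\bigcup_iQ_i)$ as $\varepsilon\downarrow0$; (iv) there is a constant $C$ independent of $\varepsilon$ with $\|Dg_\varepsilon-Dg\|_{L^\infty(\bigcup_iQ_i)}\leq C\varepsilon$; (v)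 $\det Dg_\varepsilon\geq\lambda/2$ for all sufficiently small $\varepsilon$. *)

(* Defs.v *)
From Stdlib Require Import Reals Lra.
From Coquelicot Require Import Coquelicot.
Open Scope R_scope.

Definition fn2 := R -> R -> R.
Definition map2 := R -> R -> R * R.
Definition cmp1 (f : map2) : fn2 := fun x y => fst (f x y).
Definition cmp2 (f : map2) : fn2 := fun x y => snd (f x y).

Definition nrm (x y : R) : R := sqrt (x ^ 2 + y ^ 2).

Definition dx (f : fn2) : fn2 := fun x y => Derive (fun t => f t y) x.
Definition dy (f : fn2) : fn2 := fun x y => Derive (fun t => f x t) y.

Fixpoint iterD (l : list bool) (f : fn2) : fn2 :=
  match l with
  | nil => f
  | cons b l' => (if b then dx else dy) (iterD l' f)
  end.

Definition C1_on (U : R -> R -> Prop) (f : fn2) : Prop :=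
  forall x y, U x y ->
    ex_derive (fun t => f t y) x /\ ex_derive (fun t => f x t) y /\
    continuity_2d_pt f x y /\ continuity_2d_pt (dx f) x y /\
    continuity_2d_pt (dy f) x y.

Definition Cinf_on (U : R -> R -> Prop) (f : fn2) : Prop :=
  forall l : list bool, C1_on U (iterD l f).

Definition C1_map_on (U : R -> R -> Prop) (f : map2) : Prop :=
  C1_on U (cmp1 f) /\ C1_on U (cmp2 f).
Definition Cinf_map_on (U : R -> R -> Prop) (f : map2) : Prop :=
  Cinf_on U (cmp1 f) /\ Cinf_on U (cmp2 f).

Definition is_poly_deg_le2 (f : fn2) : Prop :=
  exists a0 a1 a2 a3 a4 a5 : R, forall x y,
    f x y = a0 + a1 * x + a2 * y + a3 * x ^ 2 + a4 * x * y + a5 * y ^ 2.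
Definition is_poly_map_deg_le2 (P : map2) : Prop :=
  is_poly_deg_le2 (cmp1 P) /\ is_poly_deg_le2 (cmp2 P).

Definition Q1 (x y : R) : Prop := 0 < x < 1 /\ 0 < y < 1.
Definition Q2 (x y : R) : Prop := -1 < x < 0 /\ 0 < y < 1.
Definition Q3 (x y : R) : Prop := -1 < x < 0 /\ -1 < y < 0.
Definition Q4 (x y : R) : Prop := 0 < x < 1 /\ -1 < y < 0.
Definition Qunion (x y : R) : Prop := Q1 x y \/ Q2 x y \/ Q3 x y \/ Q4 x y.
Definition Sq (x y : R) : Prop := -1 < x < 1 /\ -1 < y < 1.

Definition jac_det (f : map2) : fn2 :=
  fun x y => dx (cmp1 f) x y * dy (cmp2 f) x y - dy (cmp1 f) x y * dx (cmp2 f) x y.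

Definition is_cutoff (chi : fn2) : Prop :=
  Cinf_on (fun _ _ => True) chi /\
  (exists r, r < 1 /\ forall x y, r <= nrm x y -> chi x y = 0) /\
  (forall x y, 0 <= chi x y <= 1) /\
  (forall x y, nrm x y < 1/2 -> chi x y = 1) /\
  (forall x y u v, nrm x y = nrm u v -> chi x y = chi u v).

Definition g_eps (g P : map2) (chi : fn2) (eps : R) : map2 :=
  fun x y =>
    if Rlt_dec (nrm x y) eps then
      let c := chi (x / eps) (y / eps) in
      (fst (P x y) + (1 - c) * (fst (g x y) - fst (P x y)),
       snd (P x y) + (1 - c) * (snd (g x y) - snd (P x y)))
    else g x y.

Definition W21_dens_comp (u : fn2) : fn2 := fun x y =>
  Rabs (u x y) + Rabs (dx u x y) + Rabs (dy u x y)
  + Rabs (dx (dx u) x y) + Rabs (dy (dx u) x y)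
  + Rabs (dx (dy u) x y) + Rabs (dy (dy u) x y).
Definition W21_dens (f h : map2) : fn2 := fun x y =>
  W21_dens_comp (fun a b => cmp1 f a b - cmp1 h a b) x y
  + W21_dens_comp (fun a b => cmp2 f a b - cmp2 h a b) x y.

Definition rect_integral (a b c d : R) (h : fn2) (v : R) : Prop :=
  (forall x, a < x < b -> ex_RInt (fun y => h x y) c d) /\
  is_RInt (fun x => RInt (fun y => h x y) c d) a b v.

Definition W21_conv (f : R -> map2) (h : map2) : Prop :=
  forall eta, 0 < eta -> exists delta, 0 < delta /\
    forall eps, 0 < eps < delta -> exists v1 v2 v3 v4,
      rect_integral 0 1 0 1 (W21_dens (f eps) h) v1 /\
      rect_integral (-1) 0 0 1 (W21_dens (f eps) h) v2 /\
      rect_integral (-1) 0 (-1) 0 (W21_dens (f eps) h) v3 /\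
      rect_integral 0 1 (-1) 0 (W21_dens (f eps) h) v4 /\
      v1 + v2 + v3 + v4 < eta.

(* Main.v *)
Require Import Defs.
From Stdlib Require Import Reals Lra Lia FunctionalExtensionality List ZArith.
From Coquelicot Require Import Coquelicot.
Open Scope R_scope.

Definition TT : R -> R -> Prop := fun _ _ => True.
Definition opn (U : R -> R -> Prop) := forall x y, U x y -> locally_2d U x y.

Lemma opn_rect a b c d : opn (fun x y => a < x < b /\ c < y < d).
Proof.
intros x y [[h1 h2] [h3 h4]].
assert (hd: 0 < Rmin (Rmin (x-a) (b-x)) (Rmin (y-c) (d-y))).
{ repeat apply Rmin_pos; lra. }
exists (mkposreal _ hd); simpl; intros u v hu hv.
pose proof (Rmin_l (Rmin (x-a) (b-x)) (Rmin (y-c) (d-y))).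
pose proof (Rmin_r (Rmin (x-a) (b-x)) (Rmin (y-c) (d-y))).
pose proof (Rmin_l (x-a) (b-x)). pose proof (Rmin_r (x-a) (b-x)).
pose proof (Rmin_l (y-c) (d-y)). pose proof (Rmin_r (y-c) (d-y)).
apply Rabs_def2 in hu; apply Rabs_def2 in hv. lra.
Qed.

Lemma opn_TT : opn TT.
Proof. intros x y _. exists (mkposreal 1 Rlt_0_1). intros; exact I. Qed.

Lemma loc_x U x y : opn U -> U x y -> locally x (fun t => U t y).
Proof.
intros HU H. destruct (HU x y H) as [d Hd]. exists d. intros t Ht.
apply Hd; [exact Ht|]. rewrite Rminus_eq_0, Rabs_R0. apply cond_pos.
Qed.

Lemma loc_y U x y : opn U -> U x y -> locally y (fun t => U x t).
Proof.
intros HU H. destruct (HU x y H) as [d Hd]. exists d. intros t Ht.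
apply Hd; [|exact Ht]. rewrite Rminus_eq_0, Rabs_R0. apply cond_pos.
Qed.

Lemma iterD_loc U f h : opn U -> (forall x y, U x y -> f x y = h x y) ->
  forall l x y, U x y -> iterD l f x y = iterD l h x y.
Proof.
intros HU Hfh l; induction l as [|b l IH]; intros x y Hxy; simpl; [auto|].
destruct b; unfold dx, dy; apply Derive_ext_loc.
- generalize (loc_x U x y HU Hxy). apply filter_imp. intros t Ht; apply IH; exact Ht.
- generalize (loc_y U x y HU Hxy). apply filter_imp. intros t Ht; apply IH; exact Ht.
Qed.

Lemma C1_loc U f h : opn U -> (forall x y, U x y -> f x y = h x y) -> C1_on U h -> C1_on U f.
Proof.
intros HU E H x y Hxy. destruct (H x y Hxy) as (h1&h2&h3&h4&h5).
assert (Ex: forall u v, U u v -> dx f u v = dx h u v).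
{ intros u v Huv. exact (iterD_loc U f h HU E (true::nil) u v Huv). }
assert (Ey: forall u v, U u v -> dy f u v = dy h u v).
{ intros u v Huv. exact (iterD_loc U f h HU E (false::nil) u v Huv). }
destruct (HU x y Hxy) as [d Hd].
repeat split.
- apply (ex_derive_ext_loc (fun t => h t y)); [|exact h1].
  generalize (loc_x U x y HU Hxy). apply filter_imp. intros t Ht. symmetry; auto.
- apply (ex_derive_ext_loc (fun t => h x t)); [|exact h2].
  generalize (loc_y U x y HU Hxy). apply filter_imp. intros t Ht. symmetry; auto.
- apply (continuity_2d_pt_ext_loc h); [|exact h3].
  exists d. intros u v hu hv. symmetry; auto.
- apply (continuity_2d_pt_ext_loc (dx h)); [|exact h4].
  exists d. intros u v hu hv. symmetry; auto.
- apply (continuity_2d_pt_ext_loc (dy h)); [|exact h5].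
  exists d. intros u v hu hv. symmetry; auto.
Qed.

Lemma C1_mono U V f : (forall x y, U x y -> V x y) -> C1_on V f -> C1_on U f.
Proof. intros H1 H2 x y H; apply H2; auto. Qed.

Lemma C1_of U F Fx Fy : opn U ->
  (forall x y, U x y -> ex_derive (fun t => F t y) x /\ ex_derive (fun t => F x t) y /\
      dx F x y = Fx x y /\ dy F x y = Fy x y) ->
  (forall x y, U x y -> continuity_2d_pt F x y /\ continuity_2d_pt Fx x y /\ continuity_2d_pt Fy x y) ->
  C1_on U F.
Proof.
intros HU H1 H2 x y Hxy.
destruct (H1 x y Hxy) as (a1&a2&a3&a4). destruct (H2 x y Hxy) as (b1&b2&b3).
destruct (HU x y Hxy) as [d Hd].
repeat split; auto.
- apply (continuity_2d_pt_ext_loc Fx); [|exact b2].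
  exists d. intros u v hu hv. symmetry; apply H1; auto.
- apply (continuity_2d_pt_ext_loc Fy); [|exact b3].
  exists d. intros u v hu hv. symmetry; apply H1; auto.
Qed.

Lemma C1_plus U f h : opn U -> C1_on U f -> C1_on U h -> C1_on U (fun x y => f x y + h x y).
Proof.
intros HU Hf Hh.
apply (C1_of U _ (fun x y => dx f x y + dx h x y) (fun x y => dy f x y + dy h x y) HU).
- intros x y Hxy. destruct (Hf x y Hxy) as (a1&a2&_). destruct (Hh x y Hxy) as (b1&b2&_).
  repeat split.
  + exact (ex_derive_plus _ _ _ a1 b1) || exact (ex_derive_plus _ _ _ a2 b2).
  + exact (ex_derive_plus _ _ _ a1 b1) || exact (ex_derive_plus _ _ _ a2 b2).
  + unfold dx. apply Derive_plus; auto.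
  + unfold dy. apply Derive_plus; auto.
- intros x y Hxy. destruct (Hf x y Hxy) as (a1&a2&a3&a4&a5). destruct (Hh x y Hxy) as (b1&b2&b3&b4&b5).
  repeat split; apply continuity_2d_pt_plus; auto.
Qed.

Lemma C1_minus U f h : opn U -> C1_on U f -> C1_on U h -> C1_on U (fun x y => f x y - h x y).
Proof.
intros HU Hf Hh.
apply (C1_of U _ (fun x y => dx f x y - dx h x y) (fun x y => dy f x y - dy h x y) HU).
- intros x y Hxy. destruct (Hf x y Hxy) as (a1&a2&_). destruct (Hh x y Hxy) as (b1&b2&_).
  repeat split.
  + exact (ex_derive_minus _ _ _ a1 b1) || exact (ex_derive_minus _ _ _ a2 b2).
  + exact (ex_derive_minus _ _ _ a1 b1) || exact (ex_derive_minus _ _ _ a2 b2).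
  + unfold dx. apply Derive_minus; auto.
  + unfold dy. apply Derive_minus; auto.
- intros x y Hxy. destruct (Hf x y Hxy) as (a1&a2&a3&a4&a5). destruct (Hh x y Hxy) as (b1&b2&b3&b4&b5).
  repeat split; apply continuity_2d_pt_minus; auto.
Qed.

Lemma C1_mult U f h : opn U -> C1_on U f -> C1_on U h -> C1_on U (fun x y => f x y * h x y).
Proof.
intros HU Hf Hh.
apply (C1_of U _ (fun x y => dx f x y * h x y + f x y * dx h x y)
                 (fun x y => dy f x y * h x y + f x y * dy h x y) HU).
- intros x y Hxy. destruct (Hf x y Hxy) as (a1&a2&_). destruct (Hh x y Hxy) as (b1&b2&_).
  repeat split.
  + exact (ex_derive_mult _ _ _ a1 b1) || exact (ex_derive_mult _ _ _ a2 b2).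
  + exact (ex_derive_mult _ _ _ a1 b1) || exact (ex_derive_mult _ _ _ a2 b2).
  + unfold dx. exact (Derive_mult (fun t => f t y) (fun t => h t y) x a1 b1).
  + unfold dy. exact (Derive_mult (fun t => f x t) (fun t => h x t) y a2 b2).
- intros x y Hxy. destruct (Hf x y Hxy) as (a1&a2&a3&a4&a5). destruct (Hh x y Hxy) as (b1&b2&b3&b4&b5).
  repeat split; repeat first [apply continuity_2d_pt_plus | apply continuity_2d_pt_mult]; auto.
Qed.

Lemma C1_const U c : opn U -> C1_on U (fun _ _ => c).
Proof.
intros HU. apply (C1_of U _ (fun _ _ => 0) (fun _ _ => 0) HU).
- intros; repeat split; try apply ex_derive_const; unfold dx, dy; apply Derive_const.
- intros; repeat split; apply continuity_2d_pt_const.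
Qed.

Lemma C1_id1 U : opn U -> C1_on U (fun x _ => x).
Proof.
intros HU. apply (C1_of U _ (fun _ _ => 1) (fun _ _ => 0) HU).
- intros; repeat split; try apply ex_derive_const; try apply ex_derive_id.
  + unfold dx; apply Derive_id.
  + unfold dy; apply Derive_const.
- intros; repeat split; try apply continuity_2d_pt_const. apply continuity_2d_pt_id1.
Qed.

Lemma C1_id2 U : opn U -> C1_on U (fun _ y => y).
Proof.
intros HU. apply (C1_of U _ (fun _ _ => 0) (fun _ _ => 1) HU).
- intros; repeat split; try apply ex_derive_const; try apply ex_derive_id.
  + unfold dx; apply Derive_const.
  + unfold dy; apply Derive_id.
- intros; repeat split; try apply continuity_2d_pt_const. apply continuity_2d_pt_id2.
Qed.

Definition Sm (f : fn2) := Cinf_on TT f.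
Definition Smn (n : nat) (f : fn2) := forall l, (length l <= n)%nat -> C1_on TT (iterD l f).

Lemma iterD_app l b f : iterD (l ++ b :: nil) f = iterD l ((if b then dx else dy) f).
Proof. induction l as [|c l IH]; simpl; [reflexivity| rewrite IH; reflexivity]. Qed.

Lemma Sm_Smn f : Sm f <-> forall n, Smn n f.
Proof. split; intros H. - intros n l _; apply H. - intros l; apply (H (length l) l); lia. Qed.

Lemma Smn_le n m f : (m <= n)%nat -> Smn n f -> Smn m f.
Proof. intros H1 H2 l Hl; apply H2; lia. Qed.

Lemma Smn_0 n f : Smn n f -> C1_on TT f.
Proof. intros H; apply (H nil); simpl; lia. Qed.

Lemma Smn_S n f : C1_on TT f -> Smn n (dx f) -> Smn n (dy f) -> Smn (S n) f.
Proof.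
intros H0 Hx Hy l Hl. destruct l as [|b l] using rev_ind; [exact H0|].
rewrite length_app in Hl; simpl in Hl.
rewrite iterD_app. destruct b; [apply Hx|apply Hy]; lia.
Qed.

Lemma Smn_dx n f : Smn (S n) f -> Smn n (dx f).
Proof. intros H l Hl. rewrite <- (iterD_app l true). apply H. rewrite length_app; simpl; lia. Qed.
Lemma Smn_dy n f : Smn (S n) f -> Smn n (dy f).
Proof. intros H l Hl. rewrite <- (iterD_app l false). apply H. rewrite length_app; simpl; lia. Qed.

Lemma Sm_dx f : Sm f -> Sm (dx f).
Proof. intros H; apply Sm_Smn; intros n; apply Smn_dx; apply Sm_Smn; auto. Qed.
Lemma Sm_dy f : Sm f -> Sm (dy f).
Proof. intros H; apply Sm_Smn; intros n; apply Smn_dy; apply Sm_Smn; auto. Qed.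

Lemma dx_plus A B : (forall x y, ex_derive (fun t => A t y) x) -> (forall x y, ex_derive (fun t => B t y) x) ->
  dx (fun x y => A x y + B x y) = fun x y => dx A x y + dx B x y.
Proof.
intros HA HB. apply functional_extensionality; intro x; apply functional_extensionality; intro y.
unfold dx. exact (Derive_plus (fun t => A t y) (fun t => B t y) x (HA x y) (HB x y)).
Qed.
Lemma dy_plus A B : (forall x y, ex_derive (fun t => A x t) y) -> (forall x y, ex_derive (fun t => B x t) y) ->
  dy (fun x y => A x y + B x y) = fun x y => dy A x y + dy B x y.
Proof.
intros HA HB. apply functional_extensionality; intro x; apply functional_extensionality; intro y.
unfold dy. exact (Derive_plus (fun t => A x t) (fun t => B x t) y (HA x y) (HB x y)).
Qed.
Lemma dx_mult A B : (forall x y, ex_derive (fun t => A t y) x) -> (forall x y, ex_derive (fun t => B t y) x) ->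
  dx (fun x y => A x y * B x y) = fun x y => dx A x y * B x y + A x y * dx B x y.
Proof.
intros HA HB. apply functional_extensionality; intro x; apply functional_extensionality; intro y.
unfold dx. exact (Derive_mult (fun t => A t y) (fun t => B t y) x (HA x y) (HB x y)).
Qed.
Lemma dy_mult A B : (forall x y, ex_derive (fun t => A x t) y) -> (forall x y, ex_derive (fun t => B x t) y) ->
  dy (fun x y => A x y * B x y) = fun x y => dy A x y * B x y + A x y * dy B x y.
Proof.
intros HA HB. apply functional_extensionality; intro x; apply functional_extensionality; intro y.
unfold dy. exact (Derive_mult (fun t => A x t) (fun t => B x t) y (HA x y) (HB x y)).
Qed.

Lemma C1_exx f : C1_on TT f -> forall x y, ex_derive (fun t => f t y) x.
Proof. intros H x y; apply (H x y I). Qed.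
Lemma C1_exy f : C1_on TT f -> forall x y, ex_derive (fun t => f x t) y.
Proof. intros H x y; apply (H x y I). Qed.

Lemma iterD_plus n f h : Smn n f -> Smn n h -> forall l, (length l <= n)%nat ->
  iterD l (fun x y => f x y + h x y) = fun x y => iterD l f x y + iterD l h x y.
Proof.
intros Hf Hh l; induction l as [|b l IH]; intros Hl; simpl; [reflexivity|].
simpl in Hl. rewrite IH by lia.
assert (C1f : C1_on TT (iterD l f)) by (apply Hf; lia).
assert (C1h : C1_on TT (iterD l h)) by (apply Hh; lia).
destruct b.
- apply dx_plus; apply C1_exx; auto.
- apply dy_plus; apply C1_exy; auto.
Qed.

Lemma Smn_plus n f h : Smn n f -> Smn n h -> Smn n (fun x y => f x y + h x y).
Proof.
intros Hf Hh l Hl. rewrite (iterD_plus n f h Hf Hh l Hl).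
apply C1_plus; [apply opn_TT|apply Hf|apply Hh]; auto.
Qed.

Lemma Smn_mult n : forall f h, Smn n f -> Smn n h -> Smn n (fun x y => f x y * h x y).
Proof.
induction n as [|n IH]; intros f h Hf Hh.
- intros l Hl. destruct l; [|simpl in Hl; lia]. simpl.
  apply C1_mult; [apply opn_TT|apply (Smn_0 0)|apply (Smn_0 0)]; auto.
- assert (Hfx := Smn_dx n f Hf). assert (Hfy := Smn_dy n f Hf).
  assert (Hhx := Smn_dx n h Hh). assert (Hhy := Smn_dy n h Hh).
  assert (Hf' := Smn_le (S n) n f (le_S _ _ (le_n n)) Hf).
  assert (Hh' := Smn_le (S n) n h (le_S _ _ (le_n n)) Hh).
  assert (C1f := Smn_0 _ _ Hf). assert (C1h := Smn_0 _ _ Hh).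
  apply Smn_S.
  + apply C1_mult; [apply opn_TT|exact C1f|exact C1h].
  + rewrite (dx_mult f h (C1_exx f C1f) (C1_exx h C1h)).
    apply Smn_plus; [apply IH; assumption | apply IH; assumption].
  + rewrite (dy_mult f h (C1_exy f C1f) (C1_exy h C1h)).
    apply Smn_plus; [apply IH; assumption | apply IH; assumption].
Qed.

Lemma Sm_plus f h : Sm f -> Sm h -> Sm (fun x y => f x y + h x y).
Proof. rewrite !Sm_Smn; intros; apply Smn_plus; auto. Qed.
Lemma Sm_mult f h : Sm f -> Sm h -> Sm (fun x y => f x y * h x y).
Proof. rewrite !Sm_Smn; intros; apply Smn_mult; auto. Qed.

Lemma dx_const c : dx (fun _ _ => c) = fun _ _ => 0.
Proof. apply functional_extensionality; intro x; apply functional_extensionality; intro y. unfold dx; apply Derive_const. Qed.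
Lemma dy_const c : dy (fun _ _ => c) = fun _ _ => 0.
Proof. apply functional_extensionality; intro x; apply functional_extensionality; intro y. unfold dy; apply Derive_const. Qed.

Lemma Sm_const c : Sm (fun _ _ => c).
Proof.
apply Sm_Smn; intros n; revert c; induction n; intros c.
- intros l Hl; destruct l; [|simpl in Hl; lia]; apply C1_const, opn_TT.
- apply Smn_S; [apply C1_const, opn_TT| rewrite dx_const; auto| rewrite dy_const; auto].
Qed.

Lemma iterD_const0 l : iterD l (fun _ _ => 0) = fun _ _ => 0.
Proof. induction l as [|b l IH]; simpl; [reflexivity|]. rewrite IH; destruct b; [apply dx_const|apply dy_const]. Qed.

Lemma Sm_id1 : Sm (fun x _ => x).
Proof.
apply Sm_Smn; intros n; destruct n.
- intros l Hl; destruct l; [|simpl in Hl; lia]; apply C1_id1, opn_TT.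
- apply Smn_S; [apply C1_id1, opn_TT| |].
  + replace (dx (fun x _ => x)) with (fun _ _ : R => 1). apply Sm_Smn, Sm_const.
    apply functional_extensionality; intro x; apply functional_extensionality; intro y. unfold dx. symmetry; apply Derive_id.
  + replace (dy (fun x _ => x)) with (fun _ _ : R => 0). apply Sm_Smn, Sm_const.
    apply functional_extensionality; intro x; apply functional_extensionality; intro y. unfold dy. symmetry; apply Derive_const.
Qed.

Lemma Sm_id2 : Sm (fun _ y => y).
Proof.
apply Sm_Smn; intros n; destruct n.
- intros l Hl; destruct l; [|simpl in Hl; lia]; apply C1_id2, opn_TT.
- apply Smn_S; [apply C1_id2, opn_TT| |].
  + replace (dx (fun _ y => y)) with (fun _ _ : R => 0). apply Sm_Smn, Sm_const.
    apply functional_extensionality; intro x; apply functional_extensionality; intro y. unfold dx. symmetry; apply Derive_const.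
  + replace (dy (fun _ y => y)) with (fun _ _ : R => 1). apply Sm_Smn, Sm_const.
    apply functional_extensionality; intro x; apply functional_extensionality; intro y. unfold dy. symmetry; apply Derive_id.
Qed.

Lemma Sm_ext f h : (forall x y, f x y = h x y) -> Sm f -> Sm h.
Proof.
intros E H. replace h with f; auto.
apply functional_extensionality; intro x; apply functional_extensionality; intro y; auto.
Qed.

Definition poly6 (a0 a1 a2 a3 a4 a5 : R) : fn2 :=
  fun x y => a0 + a1 * x + a2 * y + a3 * x ^ 2 + a4 * x * y + a5 * y ^ 2.

Ltac smt := repeat match goal with
  | |- Sm (fun _ _ => _ + _) => apply Sm_plus
  | |- Sm (fun _ _ => _ * _) => apply Sm_mult
  | |- Sm (fun x _ => x) => apply Sm_id1
  | |- Sm (fun _ y => y) => apply Sm_id2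
  | |- Sm (fun _ _ => _) => apply Sm_const
  end.

Lemma Sm_poly6 a0 a1 a2 a3 a4 a5 : Sm (poly6 a0 a1 a2 a3 a4 a5).
Proof.
apply (Sm_ext (fun x y => a0 + a1 * x + a2 * y + a3 * (x * x) + a4 * x * y + a5 * (y * y))).
{ intros; unfold poly6; ring. }
smt.
Qed.

Lemma dx_poly6 a0 a1 a2 a3 a4 a5 x y : dx (poly6 a0 a1 a2 a3 a4 a5) x y = a1 + 2 * a3 * x + a4 * y.
Proof. unfold dx, poly6. apply is_derive_unique. auto_derive; auto. ring. Qed.
Lemma dy_poly6 a0 a1 a2 a3 a4 a5 x y : dy (poly6 a0 a1 a2 a3 a4 a5) x y = a2 + a4 * x + 2 * a5 * y.
Proof. unfold dy, poly6. apply is_derive_unique. auto_derive; auto. ring. Qed.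

Lemma Sm_C1 f U : Sm f -> C1_on U f.
Proof. intros H x y _. apply (H nil x y I). Qed.
Lemma Sm_iter f U l : Sm f -> C1_on U (iterD l f).
Proof. intros H x y _. apply (H l x y I). Qed.

Lemma abs_le a b : Rabs a <= b -> -b <= a <= b.
Proof. unfold Rabs; destruct (Rcase_abs a); lra. Qed.
Lemma abs_le' a b : -b <= a <= b -> Rabs a <= b.
Proof. unfold Rabs; destruct (Rcase_abs a); lra. Qed.
Lemma abs_lt a b : Rabs a < b -> -b < a < b.
Proof. unfold Rabs; destruct (Rcase_abs a); lra. Qed.
Lemma abs_lt' a b : -b < a < b -> Rabs a < b.
Proof. unfold Rabs; destruct (Rcase_abs a); lra. Qed.

Lemma cont_sc F e x y : 0 < e -> continuity_2d_pt F (x/e) (y/e) ->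
  continuity_2d_pt (fun u v => F (u/e) (v/e)) x y.
Proof.
intros He H eps. destruct (H eps) as [d Hd].
assert (hd : 0 < d * e) by (apply Rmult_lt_0_compat; [apply cond_pos|lra]).
exists (mkposreal _ hd). simpl. intros u v hu hv. apply Hd.
- replace (u/e - x/e) with ((u - x) / e) by (field; lra).
  unfold Rdiv; rewrite Rabs_mult, Rabs_inv, (Rabs_pos_eq e) by lra.
  apply (Rmult_lt_reg_r e); [lra|]. field_simplify; lra.
- replace (v/e - y/e) with ((v - y) / e) by (field; lra).
  unfold Rdiv; rewrite Rabs_mult, Rabs_inv, (Rabs_pos_eq e) by lra.
  apply (Rmult_lt_reg_r e); [lra|]. field_simplify; lra.
Qed.

Lemma is_dx_sc F c e x y : e <> 0 -> ex_derive (fun t => F t (y/e)) (x/e) ->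
  is_derive (fun t => c * F (t/e) (y/e)) x (c * /e * dx F (x/e) (y/e)).
Proof. intros He H. unfold dx. auto_derive. auto. unfold Rdiv; ring. Qed.
Lemma is_dy_sc F c e x y : e <> 0 -> ex_derive (fun t => F (x/e) t) (y/e) ->
  is_derive (fun t => c * F (x/e) (t/e)) y (c * /e * dy F (x/e) (y/e)).
Proof. intros He H. unfold dy. auto_derive. auto. unfold Rdiv; ring. Qed.

Lemma dx_sc F c e : e <> 0 -> (forall x y, ex_derive (fun t => F t y) x) ->
  dx (fun x y => c * F (x/e) (y/e)) = fun x y => (c * /e) * dx F (x/e) (y/e).
Proof.
intros He H. apply functional_extensionality; intro x; apply functional_extensionality; intro y.
unfold dx at 1. apply is_derive_unique. apply is_dx_sc; auto.
Qed.
Lemma dy_sc F c e : e <> 0 -> (forall x y, ex_derive (fun t => F x t) y) ->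
  dy (fun x y => c * F (x/e) (y/e)) = fun x y => (c * /e) * dy F (x/e) (y/e).
Proof.
intros He H. apply functional_extensionality; intro x; apply functional_extensionality; intro y.
unfold dy at 1. apply is_derive_unique. apply is_dy_sc; auto.
Qed.

Lemma C1_sc F c e : 0 < e -> C1_on TT F -> C1_on TT (fun x y => c * F (x/e) (y/e)).
Proof.
intros He H.
apply (C1_of TT _ (fun x y => (c * /e) * dx F (x/e) (y/e)) (fun x y => (c * /e) * dy F (x/e) (y/e)) opn_TT).
- intros x y _. destruct (H (x/e) (y/e) I) as (h1&h2&_). repeat split.
  + eexists; apply is_dx_sc; [lra|exact h1].
  + eexists; apply is_dy_sc; [lra|exact h2].
  + unfold dx at 1. apply is_derive_unique. apply is_dx_sc; [lra|exact h1].
  + unfold dy at 1. apply is_derive_unique. apply is_dy_sc; [lra|exact h2].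
- intros x y _. destruct (H (x/e) (y/e) I) as (_&_&h3&h4&h5). repeat split;
  apply continuity_2d_pt_mult; try apply continuity_2d_pt_const;
  apply (cont_sc _ e x y He); auto.
Qed.

Lemma iterD_sc F c e : 0 < e -> Sm F -> forall l,
  iterD l (fun x y => c * F (x/e) (y/e)) = fun x y => (c * (/e) ^ (length l)) * iterD l F (x/e) (y/e).
Proof.
intros He HF l. induction l as [|b l IH].
- simpl. apply functional_extensionality; intro x; apply functional_extensionality; intro y. ring.
- simpl. rewrite IH. destruct b.
  + rewrite (dx_sc (iterD l F) _ e (Rgt_not_eq _ _ He) (C1_exx _ (Sm_iter _ _ l HF))).
    apply functional_extensionality; intro x; apply functional_extensionality; intro y. ring.
  + rewrite (dy_sc (iterD l F) _ e (Rgt_not_eq _ _ He) (C1_exy _ (Sm_iter _ _ l HF))).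
    apply functional_extensionality; intro x; apply functional_extensionality; intro y. ring.
Qed.

Lemma Sm_sc F c e : 0 < e -> Sm F -> Sm (fun x y => c * F (x/e) (y/e)).
Proof. intros He HF l. rewrite (iterD_sc F c e He HF l). apply C1_sc; auto. Qed.

Lemma nrm_scale x y e : 0 < e -> nrm (x/e) (y/e) = nrm x y / e.
Proof.
intros He. unfold nrm.
replace ((x/e)^2 + (y/e)^2) with ((x^2 + y^2) * (/e)^2) by (field; lra).
rewrite sqrt_mult_alt by nra. rewrite sqrt_pow2 by (left; apply Rinv_0_lt_compat; lra).
unfold Rdiv; reflexivity.
Qed.

Lemma abs_le_nrm1 x y : Rabs x <= nrm x y.
Proof.
unfold nrm. rewrite <- sqrt_Rsqr_abs. apply sqrt_le_1_alt. unfold Rsqr. nra.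
Qed.
Lemma abs_le_nrm2 x y : Rabs y <= nrm x y.
Proof.
unfold nrm. rewrite <- sqrt_Rsqr_abs. apply sqrt_le_1_alt. unfold Rsqr. nra.
Qed.

Definition Zr (s t : R) : Prop := 1 < Rabs s \/ 1 < Rabs t.

Lemma opn_Zr : opn Zr.
Proof.
intros s t [H|H].
- assert (hd : 0 < Rabs s - 1) by lra. exists (mkposreal _ hd). simpl. intros u v hu _.
  left. pose proof (Rabs_triang_inv s (s - u)). replace (s - (s - u)) with u in H0 by ring.
  rewrite <- Rabs_Ropp in hu. replace (- (u - s)) with (s - u) in hu by ring. lra.
- assert (hd : 0 < Rabs t - 1) by lra. exists (mkposreal _ hd). simpl. intros u v _ hv.
  right. pose proof (Rabs_triang_inv t (t - v)). replace (t - (t - v)) with v in H0 by ring.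
  rewrite <- Rabs_Ropp in hv. replace (- (v - t)) with (t - v) in hv by ring. lra.
Qed.

Lemma zero_loc f : (forall s t, Zr s t -> f s t = 0) -> forall l s t, Zr s t -> iterD l f s t = 0.
Proof.
intros H l s t Hz. rewrite (iterD_loc Zr f (fun _ _ => 0) opn_Zr H l s t Hz).
rewrite iterD_const0. reflexivity.
Qed.

Lemma bnd_cont f : (forall x y, continuity_2d_pt f x y) -> (forall x y, Zr x y -> f x y = 0) ->
  exists M, 0 <= M /\ forall x y, Rabs (f x y) <= M.
Proof.
intros Hc Hz.
destruct (uniform_continuity_2d f (-1) 1 (-1) 1 (fun x y _ _ => Hc x y) (mkposreal 1 Rlt_0_1)) as [d Hd].
simpl in Hd.
destruct (archimed (/d)) as [h1 _].
assert (hd : 0 < d) by apply cond_pos.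
assert (hid : 0 < / d) by (apply Rinv_0_lt_compat; lra).
assert (hup : (0 < up (/d))%Z) by (apply lt_0_IZR; lra).
set (N := Z.to_nat (up (/d))).
assert (HN : INR N = IZR (up (/d))) by (unfold N; rewrite INR_IZR_INZ, Z2Nat.id; [reflexivity|lia]).
assert (HN0 : 0 < INR N) by lra.
assert (HNd : / INR N < d).
{ rewrite <- (Rinv_inv d). apply Rinv_lt_contravar; [apply Rmult_lt_0_compat; lra| lra]. }
exists (Rabs (f 0 0) + INR N). split; [pose proof (Rabs_pos (f 0 0)); lra|].
intros x y.
destruct (Rle_dec (Rabs x) 1) as [hx|hx]; [|rewrite Hz by (left; lra); rewrite Rabs_R0; pose proof (Rabs_pos (f 0 0)); lra].
destruct (Rle_dec (Rabs y) 1) as [hy|hy]; [|rewrite Hz by (right; lra); rewrite Rabs_R0; pose proof (Rabs_pos (f 0 0)); lra].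
assert (Hin : forall t z, 0 <= t <= 1 -> Rabs z <= 1 -> -1 <= t * z <= 1).
{ intros t z Ht Hzz. apply abs_le. rewrite Rabs_mult, (Rabs_pos_eq t) by lra. nra. }
assert (Hk : forall k, (k <= N)%nat ->
  Rabs (f (INR k / INR N * x) (INR k / INR N * y) - f 0 0) <= INR k).
{ induction k as [|k IH]; intros Hk.
  - simpl. replace (0 / INR N * x) with 0 by (field; lra). replace (0 / INR N * y) with 0 by (field; lra).
    rewrite Rminus_eq_0, Rabs_R0; lra.
  - assert (Hk' : (k <= N)%nat) by lia. specialize (IH Hk').
    assert (tk : 0 <= INR k / INR N <= 1).
    { split; [apply Rdiv_le_0_compat; [apply pos_INR|lra]|].
      apply (Rmult_le_reg_r (INR N)); [lra|]. field_simplify; [|lra]. apply le_INR; lia. }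
    assert (tk1 : 0 <= INR (S k) / INR N <= 1).
    { split; [apply Rdiv_le_0_compat; [apply pos_INR|lra]|].
      apply (Rmult_le_reg_r (INR N)); [lra|]. field_simplify; [|lra]. apply le_INR; lia. }
    assert (Hstep : Rabs (f (INR (S k) / INR N * x) (INR (S k) / INR N * y) - f (INR k / INR N * x) (INR k / INR N * y)) < 1).
    { apply Hd; try (apply Hin; auto).
      - replace (INR (S k) / INR N * x - INR k / INR N * x) with (x * / INR N) by (rewrite S_INR; field; lra).
        rewrite Rabs_mult, Rabs_inv, (Rabs_pos_eq (INR N)) by lra.
        apply Rle_lt_trans with (1 * / INR N); [apply Rmult_le_compat_r; [left; apply Rinv_0_lt_compat|]; lra| lra].
      - replace (INR (S k) / INR N * y - INR k / INR N * y) with (y * / INR N) by (rewrite S_INR; field; lra).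
        rewrite Rabs_mult, Rabs_inv, (Rabs_pos_eq (INR N)) by lra.
        apply Rle_lt_trans with (1 * / INR N); [apply Rmult_le_compat_r; [left; apply Rinv_0_lt_compat|]; lra| lra]. }
    pose proof (S_INR k) as HSk.
    pose proof (Rabs_triang (f (INR (S k) / INR N * x) (INR (S k) / INR N * y) - f (INR k / INR N * x) (INR k / INR N * y))
                            (f (INR k / INR N * x) (INR k / INR N * y) - f 0 0)).
    replace (f (INR (S k) / INR N * x) (INR (S k) / INR N * y) - f (INR k / INR N * x) (INR k / INR N * y) +
      (f (INR k / INR N * x) (INR k / INR N * y) - f 0 0)) with
      (f (INR (S k) / INR N * x) (INR (S k) / INR N * y) - f 0 0) in H by ring.
    lra. }
specialize (Hk N (le_n N)).
replace (INR N / INR N * x) with x in Hk by (field; lra).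
replace (INR N / INR N * y) with y in Hk by (field; lra).
pose proof (Rabs_triang (f x y - f 0 0) (f 0 0)). replace (f x y - f 0 0 + f 0 0) with (f x y) in H by ring.
lra.
Qed.

Definition Wf (chi : fn2) (al be : R) : fn2 := fun s t => chi s t * (al * s ^ 2 + be * t ^ 2).
Definition Ue (chi : fn2) (e al be : R) : fn2 := fun x y => e ^ 2 * Wf chi al be (x / e) (y / e).

Definition supp (chi : fn2) := exists r, r < 1 /\ forall x y, r <= nrm x y -> chi x y = 0.

Lemma Sm_Wf chi al be : Sm chi -> Sm (Wf chi al be).
Proof.
intros H. unfold Wf. apply Sm_mult; [exact H|].
apply (Sm_ext (poly6 0 0 0 al 0 be)); [intros; unfold poly6; ring| apply Sm_poly6].
Qed.

Lemma Sm_Ue chi e al be : 0 < e -> Sm chi -> Sm (Ue chi e al be).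
Proof. intros He H. unfold Ue. apply Sm_sc; auto. apply Sm_Wf; auto. Qed.

Lemma iterD_Ue chi e al be l : 0 < e -> Sm chi ->
  iterD l (Ue chi e al be) = fun x y => (e ^ 2 * (/ e) ^ length l) * iterD l (Wf chi al be) (x / e) (y / e).
Proof. intros He H. unfold Ue. apply iterD_sc; auto. apply Sm_Wf; auto. Qed.

Lemma Wf_zero chi al be : supp chi -> forall l s t, Zr s t -> iterD l (Wf chi al be) s t = 0.
Proof.
intros [r [hr Hr]]. apply zero_loc. intros s t [H|H]; unfold Wf; rewrite Hr; [ring| |ring|].
- pose proof (abs_le_nrm1 s t); lra.
- pose proof (abs_le_nrm2 s t); lra.
Qed.

Lemma bnd_len2 (F : list bool -> fn2) :
  (forall l, exists M, 0 <= M /\ forall s t, Rabs (F l s t) <= M) ->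
  exists M, 0 <= M /\ forall l, (length l <= 2)%nat -> forall s t, Rabs (F l s t) <= M.
Proof.
intros H.
destruct (H nil) as [M0 [p0 H0]].
destruct (H (true::nil)) as [M1 [p1 H1]].
destruct (H (false::nil)) as [M2 [p2 H2]].
destruct (H (true::true::nil)) as [M3 [p3 H3]].
destruct (H (true::false::nil)) as [M4 [p4 H4]].
destruct (H (false::true::nil)) as [M5 [p5 H5]].
destruct (H (false::false::nil)) as [M6 [p6 H6]].
exists (M0+M1+M2+M3+M4+M5+M6). split; [lra|].
intros l Hl s t.
destruct l as [|b1 [|b2 [|b3 l]]]; [| | |simpl in Hl; lia].
- specialize (H0 s t); lra.
- destruct b1; [specialize (H1 s t)|specialize (H2 s t)]; lra.
- destruct b1, b2; [specialize (H3 s t)|specialize (H4 s t)|specialize (H5 s t)|specialize (H6 s t)]; lra.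
Qed.

Lemma W_bound chi al be : Sm chi -> supp chi ->
  exists M, 0 <= M /\ forall l, (length l <= 2)%nat -> forall s t, Rabs (iterD l (Wf chi al be) s t) <= M.
Proof.
intros Hs Hz. apply (bnd_len2 (fun l => iterD l (Wf chi al be))).
intros l. apply bnd_cont.
- intros x y. apply (Sm_Wf chi al be Hs l x y I).
- intros; apply Wf_zero; auto.
Qed.

Lemma coef_le1 e n : 0 < e <= 1 -> (n <= 2)%nat -> 0 <= e ^ 2 * (/ e) ^ n <= 1.
Proof.
intros He Hn. destruct n as [|[|[|n]]]; [| | |lia]; simpl.
- nra.
- replace (e * (e * 1) * (/ e * 1)) with e by (field; lra). lra.
- replace (e * (e * 1) * (/ e * (/ e * 1))) with 1 by (field; lra). lra.
Qed.

Lemma Ue_bound chi al be M e : Sm chi -> 0 < e <= 1 ->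
  (forall l, (length l <= 2)%nat -> forall s t, Rabs (iterD l (Wf chi al be) s t) <= M) ->
  forall l, (length l <= 2)%nat -> forall x y, Rabs (iterD l (Ue chi e al be) x y) <= M.
Proof.
intros Hs He HM l Hl x y. rewrite iterD_Ue by (auto; lra).
rewrite Rabs_mult. pose proof (coef_le1 e (length l) He Hl).
rewrite (Rabs_pos_eq (e ^ 2 * (/ e) ^ length l)) by lra.
specialize (HM l Hl (x/e) (y/e)). pose proof (Rabs_pos (iterD l (Wf chi al be) (x / e) (y / e))). nra.
Qed.

Lemma Ue_bound1 chi al be M e b : Sm chi -> 0 < e ->
  (forall l, (length l <= 2)%nat -> forall s t, Rabs (iterD l (Wf chi al be) s t) <= M) ->
  forall x y, Rabs (iterD (b :: nil) (Ue chi e al be) x y) <= e * M.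
Proof.
intros Hs He HM x y. rewrite iterD_Ue by (auto; lra). simpl length.
replace (e ^ 2 * (/ e) ^ 1) with e by (field; lra).
rewrite Rabs_mult, (Rabs_pos_eq e) by lra.
apply Rmult_le_compat_l; [lra|]. apply HM. simpl; lia.
Qed.

Lemma Ue_zero chi al be e : Sm chi -> supp chi -> 0 < e ->
  forall l x y, e < Rabs x \/ e < Rabs y -> iterD l (Ue chi e al be) x y = 0.
Proof.
intros Hs Hz He l x y H. rewrite iterD_Ue by auto.
rewrite Wf_zero; [ring|auto|].
unfold Zr, Rdiv. rewrite !Rabs_mult, !Rabs_inv, (Rabs_pos_eq e) by lra.
destruct H; [left|right]; apply (Rmult_lt_reg_r e); try lra; field_simplify; lra.
Qed.

Lemma chi_out chi e x y : supp chi -> 0 < e -> e <= nrm x y -> chi (x / e) (y / e) = 0.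
Proof.
intros [r [hr Hr]] He H. apply Hr. rewrite nrm_scale by auto.
apply (Rmult_le_reg_r e); [lra|]. field_simplify; [|lra]. nra.
Qed.

Lemma geps_cmp1 g P chi e x y : supp chi -> 0 < e ->
  cmp1 (g_eps g P chi e) x y = cmp1 g x y + chi (x / e) (y / e) * (cmp1 P x y - cmp1 g x y).
Proof.
intros Hz He. unfold cmp1, g_eps. destruct (Rlt_dec (nrm x y) e); simpl; [ring|].
rewrite chi_out; auto; [ring|lra].
Qed.
Lemma geps_cmp2 g P chi e x y : supp chi -> 0 < e ->
  cmp2 (g_eps g P chi e) x y = cmp2 g x y + chi (x / e) (y / e) * (cmp2 P x y - cmp2 g x y).
Proof.
intros Hz He. unfold cmp2, g_eps. destruct (Rlt_dec (nrm x y) e); simpl; [ring|].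
rewrite chi_out; auto; [ring|lra].
Qed.

Lemma side_lim F H x0 y0 ux uy : continuity_2d_pt F x0 y0 -> continuity_2d_pt H x0 y0 ->
  Rabs ux <= 1 -> Rabs uy <= 1 ->
  (forall t, 0 < t < 1 -> F (x0 + t * ux) (y0 + t * uy) = H (x0 + t * ux) (y0 + t * uy)) ->
  F x0 y0 = H x0 y0.
Proof.
intros HF HH hux huy E.
destruct (Req_dec (F x0 y0) (H x0 y0)) as [Heq|Hne]; [exact Heq|exfalso].
assert (hd : 0 < Rabs (F x0 y0 - H x0 y0) / 4).
{ apply Rdiv_lt_0_compat; [apply Rabs_pos_lt; lra|lra]. }
destruct (HF (mkposreal _ hd)) as [d1 H1]. destruct (HH (mkposreal _ hd)) as [d2 H2]. simpl in H1, H2.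
assert (pd1 := cond_pos d1). assert (pd2 := cond_pos d2).
set (t := Rmin (Rmin d1 d2) 1 / 2).
assert (ht : 0 < t < 1 /\ t < d1 /\ t < d2).
{ unfold t. pose proof (Rmin_l (Rmin d1 d2) 1). pose proof (Rmin_r (Rmin d1 d2) 1).
  pose proof (Rmin_l d1 d2). pose proof (Rmin_r d1 d2).
  assert (0 < Rmin (Rmin d1 d2) 1) by (repeat apply Rmin_pos; lra). lra. }
assert (hx : forall d : R, t < d -> Rabs (x0 + t * ux - x0) < d).
{ intros d hdd. replace (x0 + t * ux - x0) with (t * ux) by ring. rewrite Rabs_mult, (Rabs_pos_eq t) by lra. nra. }
assert (hy : forall d : R, t < d -> Rabs (y0 + t * uy - y0) < d).
{ intros d hdd. replace (y0 + t * uy - y0) with (t * uy) by ring. rewrite Rabs_mult, (Rabs_pos_eq t) by lra. nra. }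
specialize (H1 _ _ (hx d1 ltac:(lra)) (hy d1 ltac:(lra))).
specialize (H2 _ _ (hx d2 ltac:(lra)) (hy d2 ltac:(lra))).
rewrite E in H1 by lra.
pose proof (Rabs_triang (H (x0 + t * ux) (y0 + t * uy) - F x0 y0) (- (H (x0 + t * ux) (y0 + t * uy) - H x0 y0))).
rewrite Rabs_Ropp in H0.
replace (H (x0 + t * ux) (y0 + t * uy) - F x0 y0 + - (H (x0 + t * ux) (y0 + t * uy) - H x0 y0)) with (- (F x0 y0 - H x0 y0)) in H0 by ring.
rewrite Rabs_Ropp in H0. lra.
Qed.

Lemma side_C1 F p U x0 y0 ux uy : opn U -> Sm p -> (forall x y, U x y -> F x y = p x y) ->
  continuity_2d_pt F x0 y0 -> continuity_2d_pt (dx F) x0 y0 -> continuity_2d_pt (dy F) x0 y0 ->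
  Rabs ux <= 1 -> Rabs uy <= 1 -> (forall t, 0 < t < 1 -> U (x0 + t * ux) (y0 + t * uy)) ->
  F x0 y0 = p x0 y0 /\ dx F x0 y0 = dx p x0 y0 /\ dy F x0 y0 = dy p x0 y0.
Proof.
intros HU Hp E c1 c2 c3 hux huy Hin.
destruct (Hp nil x0 y0 I) as (_&_&p1&_&_).
destruct (Hp (true::nil) x0 y0 I) as (_&_&p2&_&_).
destruct (Hp (false::nil) x0 y0 I) as (_&_&p3&_&_).
repeat split.
- apply (side_lim F p x0 y0 ux uy); auto.
- apply (side_lim (dx F) (dx p) x0 y0 ux uy); auto.
  intros t ht. exact (iterD_loc U F p HU E (true::nil) _ _ (Hin t ht)).
- apply (side_lim (dy F) (dy p) x0 y0 ux uy); auto.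
  intros t ht. exact (iterD_loc U F p HU E (false::nil) _ _ (Hin t ht)).
Qed.

Lemma comp_struct F a0 a1 a2 a3 a4 a5 b0 b1 b2 b3 b4 b5 c0 c1 c2 c3 c4 c5 d0 d1 d2 d3 d4 d5 :
  C1_on Sq F ->
  (forall x y, Q1 x y -> F x y = poly6 a0 a1 a2 a3 a4 a5 x y) ->
  (forall x y, Q2 x y -> F x y = poly6 b0 b1 b2 b3 b4 b5 x y) ->
  (forall x y, Q3 x y -> F x y = poly6 c0 c1 c2 c3 c4 c5 x y) ->
  (forall x y, Q4 x y -> F x y = poly6 d0 d1 d2 d3 d4 d5 x y) ->
  (forall x y, poly6 a0 a1 a2 a3 a4 a5 x y - poly6 b0 b1 b2 b3 b4 b5 x y = (a3 - b3) * x ^ 2 + 0 * y ^ 2) /\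
  (forall x y, poly6 a0 a1 a2 a3 a4 a5 x y - poly6 c0 c1 c2 c3 c4 c5 x y = (a3 - c3) * x ^ 2 + (a5 - c5) * y ^ 2) /\
  (forall x y, poly6 a0 a1 a2 a3 a4 a5 x y - poly6 d0 d1 d2 d3 d4 d5 x y = 0 * x ^ 2 + (a5 - d5) * y ^ 2).
Proof.
intros HF E1 E2 E3 E4.
assert (V : forall y0, 0 < y0 < 1 ->
  poly6 a0 a1 a2 a3 a4 a5 0 y0 = poly6 b0 b1 b2 b3 b4 b5 0 y0 /\
  dx (poly6 a0 a1 a2 a3 a4 a5) 0 y0 = dx (poly6 b0 b1 b2 b3 b4 b5) 0 y0).
{ intros y0 hy. destruct (HF 0 y0 ltac:(unfold Sq; lra)) as (_&_&k1&k2&k3).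
  destruct (side_C1 F _ Q1 0 y0 1 0 (opn_rect 0 1 0 1) (Sm_poly6 a0 a1 a2 a3 a4 a5) E1 k1 k2 k3)
    as (s1&s2&_); [apply abs_le'; lra| apply abs_le'; lra| intros t ht; unfold Q1; lra|].
  destruct (side_C1 F _ Q2 0 y0 (-1) 0 (opn_rect (-1) 0 0 1) (Sm_poly6 b0 b1 b2 b3 b4 b5) E2 k1 k2 k3)
    as (r1&r2&_); [apply abs_le'; lra| apply abs_le'; lra| intros t ht; unfold Q2; lra|].
  split; congruence. }
assert (H14 : forall x0, 0 < x0 < 1 ->
  poly6 a0 a1 a2 a3 a4 a5 x0 0 = poly6 d0 d1 d2 d3 d4 d5 x0 0 /\
  dy (poly6 a0 a1 a2 a3 a4 a5) x0 0 = dy (poly6 d0 d1 d2 d3 d4 d5) x0 0).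
{ intros x0 hx. destruct (HF x0 0 ltac:(unfold Sq; lra)) as (_&_&k1&k2&k3).
  destruct (side_C1 F _ Q1 x0 0 0 1 (opn_rect 0 1 0 1) (Sm_poly6 a0 a1 a2 a3 a4 a5) E1 k1 k2 k3)
    as (s1&_&s2); [apply abs_le'; lra| apply abs_le'; lra| intros t ht; unfold Q1; lra|].
  destruct (side_C1 F _ Q4 x0 0 0 (-1) (opn_rect 0 1 (-1) 0) (Sm_poly6 d0 d1 d2 d3 d4 d5) E4 k1 k2 k3)
    as (r1&_&r2); [apply abs_le'; lra| apply abs_le'; lra| intros t ht; unfold Q4; lra|].
  split; congruence. }
assert (H23 : forall x0, -1 < x0 < 0 ->
  poly6 b0 b1 b2 b3 b4 b5 x0 0 = poly6 c0 c1 c2 c3 c4 c5 x0 0 /\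
  dy (poly6 b0 b1 b2 b3 b4 b5) x0 0 = dy (poly6 c0 c1 c2 c3 c4 c5) x0 0).
{ intros x0 hx. destruct (HF x0 0 ltac:(unfold Sq; lra)) as (_&_&k1&k2&k3).
  destruct (side_C1 F _ Q2 x0 0 0 1 (opn_rect (-1) 0 0 1) (Sm_poly6 b0 b1 b2 b3 b4 b5) E2 k1 k2 k3)
    as (s1&_&s2); [apply abs_le'; lra| apply abs_le'; lra| intros t ht; unfold Q2; lra|].
  destruct (side_C1 F _ Q3 x0 0 0 (-1) (opn_rect (-1) 0 (-1) 0) (Sm_poly6 c0 c1 c2 c3 c4 c5) E3 k1 k2 k3)
    as (r1&_&r2); [apply abs_le'; lra| apply abs_le'; lra| intros t ht; unfold Q3; lra|].
  split; congruence. }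
destruct (V (1/4) ltac:(lra)) as [v1 w1]. destruct (V (1/2) ltac:(lra)) as [v2 w2].
destruct (V (3/4) ltac:(lra)) as [v3 w3].
destruct (H14 (1/4) ltac:(lra)) as [p1 q1]. destruct (H14 (1/2) ltac:(lra)) as [p2 q2].
destruct (H14 (3/4) ltac:(lra)) as [p3 q3].
destruct (H23 (-1/4) ltac:(lra)) as [m1 n1]. destruct (H23 (-1/2) ltac:(lra)) as [m2 n2].
destruct (H23 (-3/4) ltac:(lra)) as [m3 n3].
rewrite !dx_poly6 in w1, w2, w3. rewrite !dy_poly6 in q1, q2, q3, n1, n2, n3.
unfold poly6 in v1, v2, v3, p1, p2, p3, m1, m2, m3.
assert (a0 = b0 /\ a2 = b2 /\ a5 = b5 /\ a1 = b1 /\ a4 = b4) as (e1&e2&e3&e4&e5) by (repeat split; lra).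
assert (a0 = d0 /\ a1 = d1 /\ a3 = d3 /\ a2 = d2 /\ a4 = d4) as (f1&f2&f3&f4&f5) by (repeat split; lra).
assert (b0 = c0 /\ b1 = c1 /\ b3 = c3 /\ b2 = c2 /\ b4 = c4) as (g1&g2&g3&g4&g5) by (repeat split; lra).
subst. unfold poly6. repeat split; intros; ring.
Qed.

Lemma RC chi e U f fe p P1k al be : Sm chi -> 0 < e -> opn U -> Sm p ->
 (forall x y, U x y -> f x y = p x y) ->
 (forall x y, P1k x y - p x y = al * x ^ 2 + be * y ^ 2) ->
 (forall x y, fe x y = f x y + chi (x / e) (y / e) * (P1k x y - f x y)) ->
 (forall l, C1_on U (iterD l fe)) /\
 (forall b x y, U x y -> iterD (b :: nil) fe x y - iterD (b :: nil) f x y = iterD (b :: nil) (Ue chi e al be) x y) /\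
 (forall x y, U x y -> W21_dens_comp (fun a b => fe a b - f a b) x y = W21_dens_comp (Ue chi e al be) x y) /\
 (forall l x y, U x y -> iterD l f x y = iterD l p x y).
Proof.
intros Hchi He HU Hp Hf HP Hfe.
assert (Hloc : forall x y, U x y -> fe x y = p x y + Ue chi e al be x y).
{ intros x y Hxy. rewrite Hfe, (Hf x y Hxy), HP. unfold Ue, Wf. field. lra. }
assert (HSu := Sm_Ue chi e al be He Hchi).
assert (HSs : Sm (fun x y => p x y + Ue chi e al be x y)) by (apply Sm_plus; auto).
split; [|split; [|split]].
- intros l. apply (C1_loc U _ (iterD l (fun x y => p x y + Ue chi e al be x y)) HU).
  + intros x y Hxy. apply (iterD_loc U _ _ HU Hloc l x y Hxy).
  + apply Sm_iter; auto.
- intros b x y Hxy.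
  rewrite (iterD_loc U _ _ HU Hloc (b :: nil) x y Hxy).
  rewrite (iterD_loc U _ _ HU Hf (b :: nil) x y Hxy).
  rewrite (iterD_plus 1%nat p (Ue chi e al be) (proj1 (Sm_Smn p) Hp 1%nat) (proj1 (Sm_Smn _) HSu 1%nat) (b :: nil) (le_n 1%nat)).
  ring.
- intros x y Hxy.
  assert (Hu : forall x y, U x y -> (fun a b => fe a b - f a b) x y = Ue chi e al be x y).
  { intros u v Huv. rewrite (Hloc u v Huv), (Hf u v Huv). ring. }
  pose proof (iterD_loc U _ _ HU Hu nil x y Hxy) as i0.
  pose proof (iterD_loc U _ _ HU Hu (true::nil) x y Hxy) as i1.
  pose proof (iterD_loc U _ _ HU Hu (false::nil) x y Hxy) as i2.
  pose proof (iterD_loc U _ _ HU Hu (true::true::nil) x y Hxy) as i3.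
  pose proof (iterD_loc U _ _ HU Hu (false::true::nil) x y Hxy) as i4.
  pose proof (iterD_loc U _ _ HU Hu (true::false::nil) x y Hxy) as i5.
  pose proof (iterD_loc U _ _ HU Hu (false::false::nil) x y Hxy) as i6.
  cbn [iterD] in i0, i1, i2, i3, i4, i5, i6.
  unfold W21_dens_comp. rewrite i0, i1, i2, i3, i4, i5, i6. reflexivity.
- intros l x y Hxy. apply (iterD_loc U _ _ HU Hf l x y Hxy).
Qed.

Lemma cont_y F x y : continuity_2d_pt F x y -> continuous (fun t => F x t) y.
Proof.
intros H. apply filterlim_locally. intros eps. destruct (H eps) as [d Hd].
exists d. intros t Ht. apply Hd; [rewrite Rminus_eq_0, Rabs_R0; apply cond_pos | exact Ht].
Qed.

Lemma exRInt_y Dn c d x : (forall x y, continuity_2d_pt Dn x y) -> ex_RInt (fun y => Dn x y) c d.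
Proof. intros H. apply (@ex_RInt_continuous R_CompleteNormedModule). intros; apply cont_y; auto. Qed.

Lemma cont_param Dn c d : c <= d -> (forall x y, continuity_2d_pt Dn x y) ->
  forall x, continuous (fun x => RInt (fun y => Dn x y) c d) x.
Proof.
intros hcd HD x. apply filterlim_locally. intros eps.
assert (he : 0 < eps / (d - c + 1)) by (apply Rdiv_lt_0_compat; [apply cond_pos|lra]).
destruct (uniform_continuity_2d Dn (x - 1) (x + 1) c d (fun u v _ _ => HD u v) (mkposreal _ he)) as [del Hdel].
simpl in Hdel.
assert (hm : 0 < Rmin del 1) by (apply Rmin_pos; [apply cond_pos|lra]).
exists (mkposreal _ hm). intros u Hu. change (Rabs (u - x) < Rmin del 1) in Hu. change (Rabs (RInt (fun y => Dn u y) c d - RInt (fun y => Dn x y) c d) < eps).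
pose proof (Rmin_l del 1). pose proof (Rmin_r del 1).
assert (Hu' : Rabs (u - x) < del) by lra. apply abs_lt in Hu.
assert (Hm : RInt (fun y => Dn u y - Dn x y) c d = RInt (fun y => Dn u y) c d - RInt (fun y => Dn x y) c d).
{ apply (RInt_minus (fun y => Dn u y) (fun y => Dn x y)); apply exRInt_y; auto. }
rewrite <- Hm.
assert (Hb : Rabs (RInt (fun y => Dn u y - Dn x y) c d) <= (d - c) * (eps / (d - c + 1))).
{ apply abs_RInt_le_const; auto.
  - apply (ex_RInt_minus (fun y => Dn u y) (fun y => Dn x y)); apply exRInt_y; auto.
  - intros t ht. left. apply Hdel; try lra. rewrite Rminus_eq_0, Rabs_R0. apply cond_pos. }
assert ((d - c) * (eps / (d - c + 1)) < eps).
{ pose proof (cond_pos eps). apply (Rmult_lt_reg_r (d - c + 1)); [lra|]. field_simplify; lra. }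
lra.
Qed.

Lemma RInt_zero_ext f a b : a <= b -> (forall x, a < x < b -> f x = 0) -> RInt f a b = 0.
Proof.
intros hab H. rewrite (RInt_ext f (fun _ => 0)).
- rewrite RInt_const. unfold scal; simpl. unfold mult; simpl. ring.
- intros x hx. rewrite Rmin_left, Rmax_right in hx by lra. auto.
Qed.

Lemma rect_int a b c d H Dn K s t : a < b -> c < d -> d - c <= 1 -> 0 <= K -> a <= s <= t -> t <= b ->
  (forall x y, a < x < b -> c < y < d -> H x y = Dn x y) ->
  (forall x y, continuity_2d_pt Dn x y) -> (forall x y, Rabs (Dn x y) <= K) ->
  (forall x y, a < x < s -> Dn x y = 0) -> (forall x y, t < x < b -> Dn x y = 0) ->
  exists v, rect_integral a b c d H v /\ v <= (t - s) * K.
Proof.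
intros hab hcd hdc hK hs ht HD Hc HK Z1 Z2.
set (F := fun x => RInt (fun y => Dn x y) c d).
assert (HF : forall x, continuous F x) by (apply cont_param; auto; lra).
assert (exF : forall p q, ex_RInt F p q) by (intros; apply (@ex_RInt_continuous R_CompleteNormedModule); auto).
exists (RInt F a b). split; [split|].
- intros x hx. apply (ex_RInt_ext (fun y => Dn x y)); [|apply exRInt_y; auto].
  intros y hy; rewrite Rmin_left, Rmax_right in hy by lra. symmetry; apply HD; lra.
- apply (is_RInt_ext F); [|apply RInt_correct; auto].
  intros x hx; rewrite Rmin_left, Rmax_right in hx by lra. unfold F. apply RInt_ext.
  intros y hy; rewrite Rmin_left, Rmax_right in hy by lra. symmetry; apply HD; lra.
- assert (E1 : RInt F a b = RInt F a s + RInt F s t + RInt F t b).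
  { rewrite <- (RInt_Chasles F a t b) by auto. rewrite <- (RInt_Chasles F a s t) by auto. reflexivity. }
  rewrite E1.
  assert (Za : RInt F a s = 0).
  { apply RInt_zero_ext; [lra|]. intros x hx; unfold F; apply RInt_zero_ext; [lra|]; intros; apply Z1; lra. }
  assert (Zb : RInt F t b = 0).
  { apply RInt_zero_ext; [lra|]. intros x hx; unfold F; apply RInt_zero_ext; [lra|]; intros; apply Z2; lra. }
  rewrite Za, Zb.
  assert (Hb : Rabs (RInt F s t) <= (t - s) * ((d - c) * K)).
  { apply abs_RInt_le_const; auto. lra. intros x hx. unfold F.
    apply abs_RInt_le_const; auto; [lra| apply exRInt_y; auto]. }
  pose proof (Rle_abs (RInt F s t)).
  assert ((t - s) * ((d - c) * K) <= (t - s) * K).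
  { apply Rmult_le_compat_l; [lra|]. nra. }
  lra.
Qed.

Definition RCf chi e (U : R -> R -> Prop) (f fe : fn2) al be (p : fn2) : Prop :=
 (forall l, C1_on U (iterD l fe)) /\
 (forall b x y, U x y -> iterD (b :: nil) fe x y - iterD (b :: nil) f x y = iterD (b :: nil) (Ue chi e al be) x y) /\
 (forall x y, U x y -> W21_dens_comp (fun a b => fe a b - f a b) x y = W21_dens_comp (Ue chi e al be) x y) /\
 (forall l x y, U x y -> iterD l f x y = iterD l p x y).

Definition Wb chi al be M := 0 <= M /\ forall l, (length l <= 2)%nat -> forall s t, Rabs (iterD l (Wf chi al be) s t) <= M.

Lemma W21_cont u : Sm u -> forall x y, continuity_2d_pt (W21_dens_comp u) x y.
Proof.
intros H x y. unfold W21_dens_comp.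
assert (Hc : forall l, continuity_2d_pt (fun a b => Rabs (iterD l u a b)) x y).
{ intros l. apply (continuity_1d_2d_pt_comp Rabs (iterD l u)); [apply Rcontinuity_abs|].
  apply (H l x y I). }
repeat apply continuity_2d_pt_plus.
- exact (Hc nil).
- exact (Hc (true::nil)).
- exact (Hc (false::nil)).
- exact (Hc (true::true::nil)).
- exact (Hc (false::true::nil)).
- exact (Hc (true::false::nil)).
- exact (Hc (false::false::nil)).
Qed.

Lemma W21_bnd u M x y : (forall l, (length l <= 2)%nat -> Rabs (iterD l u x y) <= M) ->
  0 <= W21_dens_comp u x y <= 7 * M.
Proof.
intros H. unfold W21_dens_comp.
pose proof (H nil ltac:(simpl; lia)). pose proof (H (true::nil) ltac:(simpl; lia)).
pose proof (H (false::nil) ltac:(simpl; lia)). pose proof (H (true::true::nil) ltac:(simpl; lia)).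
pose proof (H (false::true::nil) ltac:(simpl; lia)). pose proof (H (true::false::nil) ltac:(simpl; lia)).
pose proof (H (false::false::nil) ltac:(simpl; lia)).
cbn [iterD] in *.
pose proof (Rabs_pos (u x y)). pose proof (Rabs_pos (dx u x y)). pose proof (Rabs_pos (dy u x y)).
pose proof (Rabs_pos (dx (dx u) x y)). pose proof (Rabs_pos (dy (dx u) x y)).
pose proof (Rabs_pos (dx (dy u) x y)). pose proof (Rabs_pos (dy (dy u) x y)).
lra.
Qed.

Lemma W21_zero u x y : (forall l, iterD l u x y = 0) -> W21_dens_comp u x y = 0.
Proof.
intros H. unfold W21_dens_comp.
pose proof (H nil). pose proof (H (true::nil)). pose proof (H (false::nil)). pose proof (H (true::true::nil)).
pose proof (H (false::true::nil)). pose proof (H (true::false::nil)). pose proof (H (false::false::nil)).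
cbn [iterD] in *. rewrite H0, H1, H2, H3, H4, H5, H6, Rabs_R0. ring.
Qed.

Lemma INT_rect chi e a b c d ge g al1 be1 al2 be2 p1 p2 M1 M2 s t :
  Sm chi -> supp chi -> 0 < e <= 1 -> a < b -> c < d -> d - c <= 1 -> a <= s <= t -> t <= b ->
  RCf chi e (fun x y => a < x < b /\ c < y < d) (cmp1 g) (cmp1 ge) al1 be1 p1 ->
  RCf chi e (fun x y => a < x < b /\ c < y < d) (cmp2 g) (cmp2 ge) al2 be2 p2 ->
  Wb chi al1 be1 M1 -> Wb chi al2 be2 M2 ->
  (forall x, a < x < s -> e < Rabs x) -> (forall x, t < x < b -> e < Rabs x) ->
  exists v, rect_integral a b c d (W21_dens ge g) v /\ v <= (t - s) * (7 * (M1 + M2)).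
Proof.
intros Hs Hz He hab hcd hdc hst htb (_&_&D1&_) (_&_&D2&_) [m1 W1] [m2 W2] Z1 Z2.
set (Dn := fun x y => W21_dens_comp (Ue chi e al1 be1) x y + W21_dens_comp (Ue chi e al2 be2) x y).
assert (Bn : forall x y, 0 <= Dn x y <= 7 * (M1 + M2)).
{ intros x y. unfold Dn.
  pose proof (W21_bnd (Ue chi e al1 be1) M1 x y (fun l hl => Ue_bound chi al1 be1 M1 e Hs He W1 l hl x y)).
  pose proof (W21_bnd (Ue chi e al2 be2) M2 x y (fun l hl => Ue_bound chi al2 be2 M2 e Hs He W2 l hl x y)).
  lra. }
assert (Zr' : forall x y, e < Rabs x -> Dn x y = 0).
{ intros x y hx. unfold Dn. rewrite !W21_zero; [ring| |]; intros l; apply Ue_zero; auto; lra. }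
assert (HD : forall x y, a < x < b -> c < y < d -> W21_dens ge g x y = Dn x y).
{ intros x y hx hy. unfold W21_dens, Dn. rewrite D1, D2 by auto. reflexivity. }
assert (Hc : forall x y, continuity_2d_pt Dn x y).
{ intros x y. apply continuity_2d_pt_plus; apply W21_cont; apply Sm_Ue; auto; lra. }
assert (HK : forall x y, Rabs (Dn x y) <= 7 * (M1 + M2)).
{ intros x y. pose proof (Bn x y). rewrite Rabs_pos_eq; lra. }
assert (Z1' : forall x y, a < x < s -> Dn x y = 0) by (intros x y hx; apply Zr'; apply Z1; auto).
assert (Z2' : forall x y, t < x < b -> Dn x y = 0) by (intros x y hx; apply Zr'; apply Z2; auto).
assert (hK0 : 0 <= 7 * (M1 + M2)) by lra.
exact (rect_int a b c d _ Dn _ s t hab hcd hdc hK0 hst htb HD Hc HK Z1' Z2').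
Qed.

Lemma PT_rect chi e U ge g al1 be1 al2 be2 p1 p2 M1 M2 : Sm chi -> 0 < e ->
  RCf chi e U (cmp1 g) (cmp1 ge) al1 be1 p1 ->
  RCf chi e U (cmp2 g) (cmp2 ge) al2 be2 p2 ->
  Wb chi al1 be1 M1 -> Wb chi al2 be2 M2 ->
  forall x y, U x y ->
  Rabs (dx (cmp1 ge) x y - dx (cmp1 g) x y) <= e * M1 /\
  Rabs (dy (cmp1 ge) x y - dy (cmp1 g) x y) <= e * M1 /\
  Rabs (dx (cmp2 ge) x y - dx (cmp2 g) x y) <= e * M2 /\
  Rabs (dy (cmp2 ge) x y - dy (cmp2 g) x y) <= e * M2 /\
  dx (cmp1 g) x y = dx p1 x y /\ dy (cmp1 g) x y = dy p1 x y /\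
  dx (cmp2 g) x y = dx p2 x y /\ dy (cmp2 g) x y = dy p2 x y.
Proof.
intros Hs He (_&F1&_&G1) (_&F2&_&G2) [m1 W1] [m2 W2] x y Hxy.
split; [|split; [|split; [|split; [|split; [|split; [|split]]]]]].
- pose proof (F1 true x y Hxy) as E; cbn [iterD] in E; rewrite E. apply (Ue_bound1 chi _ _ _ e true); auto.
- pose proof (F1 false x y Hxy) as E; cbn [iterD] in E; rewrite E. apply (Ue_bound1 chi _ _ _ e false); auto.
- pose proof (F2 true x y Hxy) as E; cbn [iterD] in E; rewrite E. apply (Ue_bound1 chi _ _ _ e true); auto.
- pose proof (F2 false x y Hxy) as E; cbn [iterD] in E; rewrite E. apply (Ue_bound1 chi _ _ _ e false); auto.
- exact (G1 (true::nil) x y Hxy).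
- exact (G1 (false::nil) x y Hxy).
- exact (G2 (true::nil) x y Hxy).
- exact (G2 (false::nil) x y Hxy).
Qed.

Definition Bp (a0 a1 a2 a3 a4 a5 : R) : R := Rabs a1 + 2 * Rabs a3 + Rabs a4 + Rabs a2 + Rabs a4 + 2 * Rabs a5.

Lemma Bp_pos a0 a1 a2 a3 a4 a5 : 0 <= Bp a0 a1 a2 a3 a4 a5.
Proof.
unfold Bp. pose proof (Rabs_pos a1). pose proof (Rabs_pos a2). pose proof (Rabs_pos a3).
pose proof (Rabs_pos a4). pose proof (Rabs_pos a5). lra.
Qed.

Lemma lin3 a b c x y : Rabs x <= 1 -> Rabs y <= 1 -> Rabs (a + b * x + c * y) <= Rabs a + Rabs b + Rabs c.
Proof.
intros hx hy.
pose proof (Rabs_triang (a + b * x) (c * y)). pose proof (Rabs_triang a (b * x)).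
rewrite Rabs_mult in H, H0. pose proof (Rabs_pos b). pose proof (Rabs_pos c).
pose proof (Rabs_pos x). pose proof (Rabs_pos y).
assert (Rabs b * Rabs x <= Rabs b) by nra. assert (Rabs c * Rabs y <= Rabs c) by nra. lra.
Qed.

Lemma poly_bnd a0 a1 a2 a3 a4 a5 x y : Rabs x <= 1 -> Rabs y <= 1 ->
  Rabs (dx (poly6 a0 a1 a2 a3 a4 a5) x y) <= Bp a0 a1 a2 a3 a4 a5 /\
  Rabs (dy (poly6 a0 a1 a2 a3 a4 a5) x y) <= Bp a0 a1 a2 a3 a4 a5.
Proof.
intros hx hy. rewrite dx_poly6, dy_poly6.
pose proof (lin3 a1 (2 * a3) a4 x y hx hy). pose proof (lin3 a2 a4 (2 * a5) x y hx hy).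
rewrite Rabs_mult, (Rabs_pos_eq 2) in H, H0 by lra.
pose proof (Rabs_pos a1). pose proof (Rabs_pos a2). pose proof (Rabs_pos a3).
pose proof (Rabs_pos a4). pose proof (Rabs_pos a5).
unfold Bp. split; lra.
Qed.

Lemma prod_bnd a b M N : Rabs a <= M -> Rabs b <= N -> - (M * N) <= a * b <= M * N.
Proof.
intros ha hb. apply abs_le. rewrite Rabs_mult. pose proof (Rabs_pos a). pose proof (Rabs_pos b).
apply Rmult_le_compat; auto.
Qed.

Lemma det_pert A B Cc D e1 e2 e3 e4 M K e lam :
  Rabs A <= M -> Rabs B <= M -> Rabs Cc <= M -> Rabs D <= M ->
  Rabs e1 <= K * e -> Rabs e2 <= K * e -> Rabs e3 <= K * e -> Rabs e4 <= K * e ->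
  0 <= M -> 0 <= K -> 0 < e <= 1 -> lam <= A * D - B * Cc ->
  (4 * M * K + 2 * K * K) * e <= lam / 2 ->
  lam / 2 <= (A + e1) * (D + e4) - (B + e2) * (Cc + e3).
Proof.
intros hA hB hC hD h1 h2 h3 h4 hM hK he hlam hs.
pose proof (prod_bnd A e4 M (K * e) hA h4).
pose proof (prod_bnd e1 D (K * e) M h1 hD).
pose proof (prod_bnd e1 e4 (K * e) (K * e) h1 h4).
pose proof (prod_bnd B e3 M (K * e) hB h3).
pose proof (prod_bnd e2 Cc (K * e) M h2 hC).
pose proof (prod_bnd e2 e3 (K * e) (K * e) h2 h3).
assert (K * e * (K * e) <= K * K * e) by (assert (0 <= K * K) by nra; nra).
nra.
Qed.

Theorem proposition4p2
  (g P1 P2 P3 P4 : map2) (lambda : R) (chi : fn2)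
  (hP : is_poly_map_deg_le2 P1 /\ is_poly_map_deg_le2 P2 /\
        is_poly_map_deg_le2 P3 /\ is_poly_map_deg_le2 P4)
  (hg : (forall x y, Q1 x y -> g x y = P1 x y) /\
        (forall x y, Q2 x y -> g x y = P2 x y) /\
        (forall x y, Q3 x y -> g x y = P3 x y) /\
        (forall x y, Q4 x y -> g x y = P4 x y))
  (hC1 : exists G : map2, C1_map_on Sq G /\
           forall x y, Qunion x y -> G x y = g x y)
  (hlam : 0 < lambda)
  (hdet : forall x y, Qunion x y -> lambda <= jac_det g x y)
  (hchi : is_cutoff chi) :
  (* (i) *)
  (forall eps, 0 < eps < 1 ->
     C1_map_on Qunion (g_eps g P1 chi eps) /\
     (exists G : map2, C1_map_on Sq G /\
        forall x y, Qunion x y -> G x y = g_eps g P1 chi eps x y) /\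
     Cinf_map_on Q1 (g_eps g P1 chi eps) /\ Cinf_map_on Q2 (g_eps g P1 chi eps) /\
     Cinf_map_on Q3 (g_eps g P1 chi eps) /\ Cinf_map_on Q4 (g_eps g P1 chi eps)) /\
  (* (ii) *)
  (forall eps, 0 < eps < 1 ->
     (forall x y, Qunion x y -> nrm x y < eps / 2 -> g_eps g P1 chi eps x y = P1 x y) /\
     (forall x y, Qunion x y -> eps <= nrm x y -> g_eps g P1 chi eps x y = g x y)) /\
  (* (iii) *)
  W21_conv (g_eps g P1 chi) g /\
  (* (iv) *)
  (exists C : R, forall eps, 0 < eps < 1 -> forall x y, Qunion x y ->
     Rabs (dx (cmp1 (g_eps g P1 chi eps)) x y - dx (cmp1 g) x y) <= C * eps /\
     Rabs (dy (cmp1 (g_eps g P1 chi eps)) x y - dy (cmp1 g) x y) <= C * eps /\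
     Rabs (dx (cmp2 (g_eps g P1 chi eps)) x y - dx (cmp2 g) x y) <= C * eps /\
     Rabs (dy (cmp2 (g_eps g P1 chi eps)) x y - dy (cmp2 g) x y) <= C * eps) /\
  (* (v) *)
  (exists eps0, 0 < eps0 /\ forall eps, 0 < eps < eps0 -> forall x y, Qunion x y ->
     lambda / 2 <= jac_det (g_eps g P1 chi eps) x y).
Proof.
destruct hchi as (Hsm & Hsupp & Hrng & Hone & Hrad).
assert (Hs : Sm chi) by exact Hsm.
assert (Hz : supp chi) by exact Hsupp.
destruct hP as ((P1a & P1b) & (P2a & P2b) & (P3a & P3b) & (P4a & P4b)).
destruct P1a as (a0&a1&a2&a3&a4&a5&HA).
destruct P1b as (a0'&a1'&a2'&a3'&a4'&a5'&HA').
destruct P2a as (b0&b1&b2&b3&b4&b5&HB).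
destruct P2b as (b0'&b1'&b2'&b3'&b4'&b5'&HB').
destruct P3a as (c0&c1&c2&c3&c4&c5&HC).
destruct P3b as (c0'&c1'&c2'&c3'&c4'&c5'&HC').
destruct P4a as (d0&d1&d2&d3&d4&d5&HD).
destruct P4b as (d0'&d1'&d2'&d3'&d4'&d5'&HD').
destruct hg as (g1&g2&g3&g4).
destruct hC1 as [G0 [[HG1 HG2] HGg]].
assert (q1 : forall x y, Q1 x y -> Qunion x y) by (unfold Qunion; tauto).
assert (q2 : forall x y, Q2 x y -> Qunion x y) by (unfold Qunion; tauto).
assert (q3 : forall x y, Q3 x y -> Qunion x y) by (unfold Qunion; tauto).
assert (q4 : forall x y, Q4 x y -> Qunion x y) by (unfold Qunion; tauto).
assert (f1a : forall x y, Q1 x y -> cmp1 g x y = poly6 a0 a1 a2 a3 a4 a5 x y).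
{ intros x y H. unfold cmp1. rewrite g1 by exact H. exact (HA x y). }
assert (f1b : forall x y, Q1 x y -> cmp2 g x y = poly6 a0' a1' a2' a3' a4' a5' x y).
{ intros x y H. unfold cmp2. rewrite g1 by exact H. exact (HA' x y). }
assert (G1a : forall x y, Q1 x y -> cmp1 G0 x y = poly6 a0 a1 a2 a3 a4 a5 x y).
{ intros x y H. unfold cmp1 at 1. rewrite HGg by (apply q1; exact H). exact (f1a x y H). }
assert (G1b : forall x y, Q1 x y -> cmp2 G0 x y = poly6 a0' a1' a2' a3' a4' a5' x y).
{ intros x y H. unfold cmp2 at 1. rewrite HGg by (apply q1; exact H). exact (f1b x y H). }
assert (f2a : forall x y, Q2 x y -> cmp1 g x y = poly6 b0 b1 b2 b3 b4 b5 x y).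
{ intros x y H. unfold cmp1. rewrite g2 by exact H. exact (HB x y). }
assert (f2b : forall x y, Q2 x y -> cmp2 g x y = poly6 b0' b1' b2' b3' b4' b5' x y).
{ intros x y H. unfold cmp2. rewrite g2 by exact H. exact (HB' x y). }
assert (G2a : forall x y, Q2 x y -> cmp1 G0 x y = poly6 b0 b1 b2 b3 b4 b5 x y).
{ intros x y H. unfold cmp1 at 1. rewrite HGg by (apply q2; exact H). exact (f2a x y H). }
assert (G2b : forall x y, Q2 x y -> cmp2 G0 x y = poly6 b0' b1' b2' b3' b4' b5' x y).
{ intros x y H. unfold cmp2 at 1. rewrite HGg by (apply q2; exact H). exact (f2b x y H). }
assert (f3a : forall x y, Q3 x y -> cmp1 g x y = poly6 c0 c1 c2 c3 c4 c5 x y).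
{ intros x y H. unfold cmp1. rewrite g3 by exact H. exact (HC x y). }
assert (f3b : forall x y, Q3 x y -> cmp2 g x y = poly6 c0' c1' c2' c3' c4' c5' x y).
{ intros x y H. unfold cmp2. rewrite g3 by exact H. exact (HC' x y). }
assert (G3a : forall x y, Q3 x y -> cmp1 G0 x y = poly6 c0 c1 c2 c3 c4 c5 x y).
{ intros x y H. unfold cmp1 at 1. rewrite HGg by (apply q3; exact H). exact (f3a x y H). }
assert (G3b : forall x y, Q3 x y -> cmp2 G0 x y = poly6 c0' c1' c2' c3' c4' c5' x y).
{ intros x y H. unfold cmp2 at 1. rewrite HGg by (apply q3; exact H). exact (f3b x y H). }
assert (f4a : forall x y, Q4 x y -> cmp1 g x y = poly6 d0 d1 d2 d3 d4 d5 x y).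
{ intros x y H. unfold cmp1. rewrite g4 by exact H. exact (HD x y). }
assert (f4b : forall x y, Q4 x y -> cmp2 g x y = poly6 d0' d1' d2' d3' d4' d5' x y).
{ intros x y H. unfold cmp2. rewrite g4 by exact H. exact (HD' x y). }
assert (G4a : forall x y, Q4 x y -> cmp1 G0 x y = poly6 d0 d1 d2 d3 d4 d5 x y).
{ intros x y H. unfold cmp1 at 1. rewrite HGg by (apply q4; exact H). exact (f4a x y H). }
assert (G4b : forall x y, Q4 x y -> cmp2 G0 x y = poly6 d0' d1' d2' d3' d4' d5' x y).
{ intros x y H. unfold cmp2 at 1. rewrite HGg by (apply q4; exact H). exact (f4b x y H). }
destruct (comp_struct (cmp1 G0) a0 a1 a2 a3 a4 a5 b0 b1 b2 b3 b4 b5 c0 c1 c2 c3 c4 c5 d0 d1 d2 d3 d4 d5 HG1 G1a G2a G3a G4a) as (S12 & S13 & S14).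
destruct (comp_struct (cmp2 G0) a0' a1' a2' a3' a4' a5' b0' b1' b2' b3' b4' b5' c0' c1' c2' c3' c4' c5' d0' d1' d2' d3' d4' d5' HG2 G1b G2b G3b G4b) as (S12' & S13' & S14').
assert (R1a : forall e, 0 < e -> RCf chi e Q1 (cmp1 g) (cmp1 (g_eps g P1 chi e)) 0 0 (poly6 a0 a1 a2 a3 a4 a5)).
{ intros e he. unfold RCf. apply (RC chi e Q1 (cmp1 g) _ _ (cmp1 P1)); auto.
  - exact (opn_rect 0 1 0 1).
  - apply Sm_poly6.
  - intros x y. rewrite HA. unfold poly6. ring.
  - intros x y. apply geps_cmp1; auto. }
assert (exists M, Wb chi 0 0 M) as [M1a W1a] by exact (W_bound chi 0 0 Hs Hz).
assert (R1b : forall e, 0 < e -> RCf chi e Q1 (cmp2 g) (cmp2 (g_eps g P1 chi e)) 0 0 (poly6 a0' a1' a2' a3' a4' a5')).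
{ intros e he. unfold RCf. apply (RC chi e Q1 (cmp2 g) _ _ (cmp2 P1)); auto.
  - exact (opn_rect 0 1 0 1).
  - apply Sm_poly6.
  - intros x y. rewrite HA'. unfold poly6. ring.
  - intros x y. apply geps_cmp2; auto. }
assert (exists M, Wb chi 0 0 M) as [M1b W1b] by exact (W_bound chi 0 0 Hs Hz).
assert (R2a : forall e, 0 < e -> RCf chi e Q2 (cmp1 g) (cmp1 (g_eps g P1 chi e)) (a3 - b3) 0 (poly6 b0 b1 b2 b3 b4 b5)).
{ intros e he. unfold RCf. apply (RC chi e Q2 (cmp1 g) _ _ (cmp1 P1)); auto.
  - exact (opn_rect (-1) 0 0 1).
  - apply Sm_poly6.
  - intros x y. rewrite HA. exact (S12 x y).
  - intros x y. apply geps_cmp1; auto. }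
assert (exists M, Wb chi (a3 - b3) 0 M) as [M2a W2a] by exact (W_bound chi (a3 - b3) 0 Hs Hz).
assert (R2b : forall e, 0 < e -> RCf chi e Q2 (cmp2 g) (cmp2 (g_eps g P1 chi e)) (a3' - b3') 0 (poly6 b0' b1' b2' b3' b4' b5')).
{ intros e he. unfold RCf. apply (RC chi e Q2 (cmp2 g) _ _ (cmp2 P1)); auto.
  - exact (opn_rect (-1) 0 0 1).
  - apply Sm_poly6.
  - intros x y. rewrite HA'. exact (S12' x y).
  - intros x y. apply geps_cmp2; auto. }
assert (exists M, Wb chi (a3' - b3') 0 M) as [M2b W2b] by exact (W_bound chi (a3' - b3') 0 Hs Hz).
assert (R3a : forall e, 0 < e -> RCf chi e Q3 (cmp1 g) (cmp1 (g_eps g P1 chi e)) (a3 - c3) (a5 - c5) (poly6 c0 c1 c2 c3 c4 c5)).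
{ intros e he. unfold RCf. apply (RC chi e Q3 (cmp1 g) _ _ (cmp1 P1)); auto.
  - exact (opn_rect (-1) 0 (-1) 0).
  - apply Sm_poly6.
  - intros x y. rewrite HA. exact (S13 x y).
  - intros x y. apply geps_cmp1; auto. }
assert (exists M, Wb chi (a3 - c3) (a5 - c5) M) as [M3a W3a] by exact (W_bound chi (a3 - c3) (a5 - c5) Hs Hz).
assert (R3b : forall e, 0 < e -> RCf chi e Q3 (cmp2 g) (cmp2 (g_eps g P1 chi e)) (a3' - c3') (a5' - c5') (poly6 c0' c1' c2' c3' c4' c5')).
{ intros e he. unfold RCf. apply (RC chi e Q3 (cmp2 g) _ _ (cmp2 P1)); auto.
  - exact (opn_rect (-1) 0 (-1) 0).
  - apply Sm_poly6.
  - intros x y. rewrite HA'. exact (S13' x y).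
  - intros x y. apply geps_cmp2; auto. }
assert (exists M, Wb chi (a3' - c3') (a5' - c5') M) as [M3b W3b] by exact (W_bound chi (a3' - c3') (a5' - c5') Hs Hz).
assert (R4a : forall e, 0 < e -> RCf chi e Q4 (cmp1 g) (cmp1 (g_eps g P1 chi e)) 0 (a5 - d5) (poly6 d0 d1 d2 d3 d4 d5)).
{ intros e he. unfold RCf. apply (RC chi e Q4 (cmp1 g) _ _ (cmp1 P1)); auto.
  - exact (opn_rect 0 1 (-1) 0).
  - apply Sm_poly6.
  - intros x y. rewrite HA. exact (S14 x y).
  - intros x y. apply geps_cmp1; auto. }
assert (exists M, Wb chi 0 (a5 - d5) M) as [M4a W4a] by exact (W_bound chi 0 (a5 - d5) Hs Hz).
assert (R4b : forall e, 0 < e -> RCf chi e Q4 (cmp2 g) (cmp2 (g_eps g P1 chi e)) 0 (a5' - d5') (poly6 d0' d1' d2' d3' d4' d5')).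
{ intros e he. unfold RCf. apply (RC chi e Q4 (cmp2 g) _ _ (cmp2 P1)); auto.
  - exact (opn_rect 0 1 (-1) 0).
  - apply Sm_poly6.
  - intros x y. rewrite HA'. exact (S14' x y).
  - intros x y. apply geps_cmp2; auto. }
assert (exists M, Wb chi 0 (a5' - d5') M) as [M4b W4b] by exact (W_bound chi 0 (a5' - d5') Hs Hz).
assert (Mpos : 0 <= M1a /\ 0 <= M1b /\ 0 <= M2a /\ 0 <= M2b /\ 0 <= M3a /\ 0 <= M3b /\ 0 <= M4a /\ 0 <= M4b).
{ destruct W1a as [? _]. destruct W1b as [? _]. destruct W2a as [? _]. destruct W2b as [? _]. destruct W3a as [? _]. destruct W3b as [? _]. destruct W4a as [? _]. destruct W4b as [? _]. repeat split; assumption. }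
destruct Mpos as (m1a&m1b&m2a&m2b&m3a&m3b&m4a&m4b).
assert (exists Ms, M1a <= Ms /\ M1b <= Ms /\ M2a <= Ms /\ M2b <= Ms /\ M3a <= Ms /\ M3b <= Ms /\ M4a <= Ms /\ M4b <= Ms /\ 0 <= Ms) as [Ms HMs].
{ exists (M1a+M1b+M2a+M2b+M3a+M3b+M4a+M4b). repeat split; lra. }
assert (exists Bs, Bp a0 a1 a2 a3 a4 a5 <= Bs /\ Bp a0' a1' a2' a3' a4' a5' <= Bs /\ Bp b0 b1 b2 b3 b4 b5 <= Bs /\ Bp b0' b1' b2' b3' b4' b5' <= Bs /\ Bp c0 c1 c2 c3 c4 c5 <= Bs /\ Bp c0' c1' c2' c3' c4' c5' <= Bs /\ Bp d0 d1 d2 d3 d4 d5 <= Bs /\ Bp d0' d1' d2' d3' d4' d5' <= Bs) as [Bs HBs].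
{ exists ((Bp a0 a1 a2 a3 a4 a5)+(Bp a0' a1' a2' a3' a4' a5')+(Bp b0 b1 b2 b3 b4 b5)+(Bp b0' b1' b2' b3' b4' b5')+(Bp c0 c1 c2 c3 c4 c5)+(Bp c0' c1' c2' c3' c4' c5')+(Bp d0 d1 d2 d3 d4 d5)+(Bp d0' d1' d2' d3' d4' d5')).
pose proof (Bp_pos a0 a1 a2 a3 a4 a5). pose proof (Bp_pos a0' a1' a2' a3' a4' a5'). pose proof (Bp_pos b0 b1 b2 b3 b4 b5). pose proof (Bp_pos b0' b1' b2' b3' b4' b5'). pose proof (Bp_pos c0 c1 c2 c3 c4 c5). pose proof (Bp_pos c0' c1' c2' c3' c4' c5'). pose proof (Bp_pos d0 d1 d2 d3 d4 d5). pose proof (Bp_pos d0' d1' d2' d3' d4' d5'). repeat split; lra. }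
assert (Bs0 : 0 <= Bs) by (pose proof (Bp_pos a0 a1 a2 a3 a4 a5); lra).
assert (PT : forall e, 0 < e -> forall x y, Qunion x y ->
  Rabs (dx (cmp1 (g_eps g P1 chi e)) x y - dx (cmp1 g) x y) <= Ms * e /\
  Rabs (dy (cmp1 (g_eps g P1 chi e)) x y - dy (cmp1 g) x y) <= Ms * e /\
  Rabs (dx (cmp2 (g_eps g P1 chi e)) x y - dx (cmp2 g) x y) <= Ms * e /\
  Rabs (dy (cmp2 (g_eps g P1 chi e)) x y - dy (cmp2 g) x y) <= Ms * e /\
  Rabs (dx (cmp1 g) x y) <= Bs /\ Rabs (dy (cmp1 g) x y) <= Bs /\
  Rabs (dx (cmp2 g) x y) <= Bs /\ Rabs (dy (cmp2 g) x y) <= Bs).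
{ intros e he x y Hq.
  destruct HMs as (hm1&hm2&hm3&hm4&hm5&hm6&hm7&hm8&hm9).
  destruct HBs as (hb1&hb2&hb3&hb4&hb5&hb6&hb7&hb8).
  destruct Hq as [H|[H|[H|H]]].
  - destruct (PT_rect chi e Q1 (g_eps g P1 chi e) g 0 0 0 0 (poly6 a0 a1 a2 a3 a4 a5) (poly6 a0' a1' a2' a3' a4' a5') M1a M1b Hs he (R1a e he) (R1b e he) W1a W1b x y H) as (k1&k2&k3&k4&k5&k6&k7&k8).
    assert (hx : Rabs x <= 1) by (apply abs_le'; unfold Q1 in H; lra).
    assert (hy : Rabs y <= 1) by (apply abs_le'; unfold Q1 in H; lra).
    destruct (poly_bnd a0 a1 a2 a3 a4 a5 x y hx hy) as [u1 u2].
    destruct (poly_bnd a0' a1' a2' a3' a4' a5' x y hx hy) as [u3 u4].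
    rewrite <- k5 in u1; rewrite <- k6 in u2; rewrite <- k7 in u3; rewrite <- k8 in u4.
    assert (e * M1a <= Ms * e) by (rewrite (Rmult_comm Ms); apply Rmult_le_compat_l; lra).
    assert (e * M1b <= Ms * e) by (rewrite (Rmult_comm Ms); apply Rmult_le_compat_l; lra).
    repeat split; lra.
  - destruct (PT_rect chi e Q2 (g_eps g P1 chi e) g (a3 - b3) 0 (a3' - b3') 0 (poly6 b0 b1 b2 b3 b4 b5) (poly6 b0' b1' b2' b3' b4' b5') M2a M2b Hs he (R2a e he) (R2b e he) W2a W2b x y H) as (k1&k2&k3&k4&k5&k6&k7&k8).
    assert (hx : Rabs x <= 1) by (apply abs_le'; unfold Q2 in H; lra).
    assert (hy : Rabs y <= 1) by (apply abs_le'; unfold Q2 in H; lra).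
    destruct (poly_bnd b0 b1 b2 b3 b4 b5 x y hx hy) as [u1 u2].
    destruct (poly_bnd b0' b1' b2' b3' b4' b5' x y hx hy) as [u3 u4].
    rewrite <- k5 in u1; rewrite <- k6 in u2; rewrite <- k7 in u3; rewrite <- k8 in u4.
    assert (e * M2a <= Ms * e) by (rewrite (Rmult_comm Ms); apply Rmult_le_compat_l; lra).
    assert (e * M2b <= Ms * e) by (rewrite (Rmult_comm Ms); apply Rmult_le_compat_l; lra).
    repeat split; lra.
  - destruct (PT_rect chi e Q3 (g_eps g P1 chi e) g (a3 - c3) (a5 - c5) (a3' - c3') (a5' - c5') (poly6 c0 c1 c2 c3 c4 c5) (poly6 c0' c1' c2' c3' c4' c5') M3a M3b Hs he (R3a e he) (R3b e he) W3a W3b x y H) as (k1&k2&k3&k4&k5&k6&k7&k8).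
    assert (hx : Rabs x <= 1) by (apply abs_le'; unfold Q3 in H; lra).
    assert (hy : Rabs y <= 1) by (apply abs_le'; unfold Q3 in H; lra).
    destruct (poly_bnd c0 c1 c2 c3 c4 c5 x y hx hy) as [u1 u2].
    destruct (poly_bnd c0' c1' c2' c3' c4' c5' x y hx hy) as [u3 u4].
    rewrite <- k5 in u1; rewrite <- k6 in u2; rewrite <- k7 in u3; rewrite <- k8 in u4.
    assert (e * M3a <= Ms * e) by (rewrite (Rmult_comm Ms); apply Rmult_le_compat_l; lra).
    assert (e * M3b <= Ms * e) by (rewrite (Rmult_comm Ms); apply Rmult_le_compat_l; lra).
    repeat split; lra.
  - destruct (PT_rect chi e Q4 (g_eps g P1 chi e) g 0 (a5 - d5) 0 (a5' - d5') (poly6 d0 d1 d2 d3 d4 d5) (poly6 d0' d1' d2' d3' d4' d5') M4a M4b Hs he (R4a e he) (R4b e he) W4a W4b x y H) as (k1&k2&k3&k4&k5&k6&k7&k8).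
    assert (hx : Rabs x <= 1) by (apply abs_le'; unfold Q4 in H; lra).
    assert (hy : Rabs y <= 1) by (apply abs_le'; unfold Q4 in H; lra).
    destruct (poly_bnd d0 d1 d2 d3 d4 d5 x y hx hy) as [u1 u2].
    destruct (poly_bnd d0' d1' d2' d3' d4' d5' x y hx hy) as [u3 u4].
    rewrite <- k5 in u1; rewrite <- k6 in u2; rewrite <- k7 in u3; rewrite <- k8 in u4.
    assert (e * M4a <= Ms * e) by (rewrite (Rmult_comm Ms); apply Rmult_le_compat_l; lra).
    assert (e * M4b <= Ms * e) by (rewrite (Rmult_comm Ms); apply Rmult_le_compat_l; lra).
    repeat split; lra.
}
split; [|split; [|split; [|split]]].
-
  intros e he. assert (he0 : 0 < e) by lra.
  split; [|split; [|split; [|split; [|split]]]].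
  + split; intros x y [H|[H|[H|H]]].
    * exact (proj1 (R1a e he0) nil x y H).
    * exact (proj1 (R2a e he0) nil x y H).
    * exact (proj1 (R3a e he0) nil x y H).
    * exact (proj1 (R4a e he0) nil x y H).
    * exact (proj1 (R1b e he0) nil x y H).
    * exact (proj1 (R2b e he0) nil x y H).
    * exact (proj1 (R3b e he0) nil x y H).
    * exact (proj1 (R4b e he0) nil x y H).
  + exists (fun x y => (cmp1 G0 x y + chi (x / e) (y / e) * (cmp1 P1 x y - cmp1 G0 x y),
                      cmp2 G0 x y + chi (x / e) (y / e) * (cmp2 P1 x y - cmp2 G0 x y))).
    assert (HS : opn Sq) by exact (opn_rect (-1) 1 (-1) 1).
    assert (Hc : C1_on Sq (fun x y => chi (x / e) (y / e))).
    { apply Sm_C1. apply (Sm_ext (fun x y => 1 * chi (x / e) (y / e))); [intros; ring|]. apply Sm_sc; auto. }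
    assert (Hp1 : C1_on Sq (cmp1 P1)).
    { apply Sm_C1. apply (Sm_ext (poly6 a0 a1 a2 a3 a4 a5)); [intros; symmetry; exact (HA x y)| apply Sm_poly6]. }
    assert (Hp2 : C1_on Sq (cmp2 P1)).
    { apply Sm_C1. apply (Sm_ext (poly6 a0' a1' a2' a3' a4' a5')); [intros; symmetry; exact (HA' x y)| apply Sm_poly6]. }
    split; [split|].
    * exact (C1_plus Sq _ _ HS HG1 (C1_mult Sq _ _ HS Hc (C1_minus Sq _ _ HS Hp1 HG1))).
    * exact (C1_plus Sq _ _ HS HG2 (C1_mult Sq _ _ HS Hc (C1_minus Sq _ _ HS Hp2 HG2))).
    * intros x y Hq. rewrite (surjective_pairing (g_eps g P1 chi e x y)). f_equal.
      -- change (cmp1 G0 x y + chi (x / e) (y / e) * (cmp1 P1 x y - cmp1 G0 x y) = cmp1 (g_eps g P1 chi e) x y).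
         rewrite geps_cmp1 by auto. unfold cmp1. rewrite (HGg x y Hq). reflexivity.
      -- change (cmp2 G0 x y + chi (x / e) (y / e) * (cmp2 P1 x y - cmp2 G0 x y) = cmp2 (g_eps g P1 chi e) x y).
         rewrite geps_cmp2 by auto. unfold cmp2. rewrite (HGg x y Hq). reflexivity.
  + split; [exact (proj1 (R1a e he0)) | exact (proj1 (R1b e he0))].
  + split; [exact (proj1 (R2a e he0)) | exact (proj1 (R2b e he0))].
  + split; [exact (proj1 (R3a e he0)) | exact (proj1 (R3b e he0))].
  + split; [exact (proj1 (R4a e he0)) | exact (proj1 (R4b e he0))].
-
  intros e he. split.
  + intros x y _ Hn. unfold g_eps. destruct (Rlt_dec (nrm x y) e) as [h|h]; [|lra].
    cbv zeta. rewrite Hone.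
    * destruct (P1 x y); simpl; f_equal; ring.
    * rewrite nrm_scale by lra. apply (Rmult_lt_reg_r e); [lra|]. field_simplify; lra.
  + intros x y _ Hn. unfold g_eps. destruct (Rlt_dec (nrm x y) e) as [h|h]; [lra|reflexivity].
-
  intros eta heta.
  set (T := 7 * (M1a+M1b+M2a+M2b+M3a+M3b+M4a+M4b)).
  assert (T0 : 0 <= T) by (unfold T; lra).
  assert (hd : 0 < Rmin 1 (eta / (T + 1))) by (apply Rmin_pos; [lra| apply Rdiv_lt_0_compat; lra]).
  exists (Rmin 1 (eta / (T + 1))). split; [exact hd|].
  intros e he. pose proof (Rmin_l 1 (eta / (T + 1))). pose proof (Rmin_r 1 (eta / (T + 1))).
  assert (he1 : 0 < e <= 1) by lra. assert (he0 : 0 < e) by lra.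
  assert (Zp : forall x, e < x < 1 -> e < Rabs x) by (intros x hx; rewrite Rabs_pos_eq; lra).
  assert (Zn : forall x, -1 < x < - e -> e < Rabs x) by (intros x hx; rewrite Rabs_left; lra).
  assert (Zv : forall x, 0 < x < 0 -> e < Rabs x) by (intros x hx; lra).
  destruct (INT_rect chi e 0 1 0 1 (g_eps g P1 chi e) g 0 0 0 0 (poly6 a0 a1 a2 a3 a4 a5) (poly6 a0' a1' a2' a3' a4' a5') M1a M1b 0 e Hs Hz he1 ltac:(lra) ltac:(lra) ltac:(lra) ltac:(lra) ltac:(lra) (R1a e he0) (R1b e he0) W1a W1b Zv Zp) as [v1 [I1 J1]].
  destruct (INT_rect chi e (-1) 0 0 1 (g_eps g P1 chi e) g (a3 - b3) 0 (a3' - b3') 0 (poly6 b0 b1 b2 b3 b4 b5) (poly6 b0' b1' b2' b3' b4' b5') M2a M2b (- e) 0 Hs Hz he1 ltac:(lra) ltac:(lra) ltac:(lra) ltac:(lra) ltac:(lra) (R2a e he0) (R2b e he0) W2a W2b Zn Zv) as [v2 [I2 J2]].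
  destruct (INT_rect chi e (-1) 0 (-1) 0 (g_eps g P1 chi e) g (a3 - c3) (a5 - c5) (a3' - c3') (a5' - c5') (poly6 c0 c1 c2 c3 c4 c5) (poly6 c0' c1' c2' c3' c4' c5') M3a M3b (- e) 0 Hs Hz he1 ltac:(lra) ltac:(lra) ltac:(lra) ltac:(lra) ltac:(lra) (R3a e he0) (R3b e he0) W3a W3b Zn Zv) as [v3 [I3 J3]].
  destruct (INT_rect chi e 0 1 (-1) 0 (g_eps g P1 chi e) g 0 (a5 - d5) 0 (a5' - d5') (poly6 d0 d1 d2 d3 d4 d5) (poly6 d0' d1' d2' d3' d4' d5') M4a M4b 0 e Hs Hz he1 ltac:(lra) ltac:(lra) ltac:(lra) ltac:(lra) ltac:(lra) (R4a e he0) (R4b e he0) W4a W4b Zv Zp) as [v4 [I4 J4]].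
  exists v1, v2, v3, v4. split; [exact I1|split; [exact I2|split; [exact I3|split; [exact I4|]]]].
  assert (Hsum : v1 + v2 + v3 + v4 <= e * T).
  { unfold T. replace (e - 0) with e in J1, J4 by ring. replace (0 - - e) with e in J2, J3 by ring. lra. }
  assert (e * (T + 1) < eta).
  { apply (Rlt_le_trans _ ((eta / (T + 1)) * (T + 1))).
    - apply Rmult_lt_compat_r; lra.
    - right; field; lra. }
  nra.
-
  exists Ms. intros e he x y Hq. destruct (PT e (proj1 he) x y Hq) as (k1&k2&k3&k4&_). auto.
-
  set (Qc := 4 * Bs * Ms + 2 * Ms * Ms).
  assert (Qc0 : 0 <= Qc) by (unfold Qc; nra).
  assert (hd : 0 < Rmin (1/2) (lambda / (2 * (Qc + 1)))) by (apply Rmin_pos; [lra| apply Rdiv_lt_0_compat; lra]).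
  exists (Rmin (1/2) (lambda / (2 * (Qc + 1)))). split; [exact hd|].
  intros e he x y Hq.
  pose proof (Rmin_l (1/2) (lambda / (2 * (Qc + 1)))). pose proof (Rmin_r (1/2) (lambda / (2 * (Qc + 1)))).
  assert (he0 : 0 < e <= 1) by lra.
  assert (HQ : Qc * e <= lambda / 2).
  { assert (e * (2 * (Qc + 1)) <= lambda).
    { apply (Rle_trans _ ((lambda / (2 * (Qc + 1))) * (2 * (Qc + 1)))).
      - apply Rmult_le_compat_r; lra.
      - right; field; lra. }
    nra. }
  destruct (PT e (proj1 he0) x y Hq) as (k1&k2&k3&k4&k5&k6&k7&k8).
  pose proof (det_pert (dx (cmp1 g) x y) (dy (cmp1 g) x y) (dx (cmp2 g) x y) (dy (cmp2 g) x y)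
    (dx (cmp1 (g_eps g P1 chi e)) x y - dx (cmp1 g) x y)
    (dy (cmp1 (g_eps g P1 chi e)) x y - dy (cmp1 g) x y)
    (dx (cmp2 (g_eps g P1 chi e)) x y - dx (cmp2 g) x y)
    (dy (cmp2 (g_eps g P1 chi e)) x y - dy (cmp2 g) x y) Bs Ms e lambda
    k5 k6 k7 k8 k1 k2 k3 k4 Bs0 (proj2 (proj2 (proj2 (proj2 (proj2 (proj2 (proj2 (proj2 HMs)))))))) he0 (hdet x y Hq) HQ) as HH.
  unfold jac_det.
  replace (dx (cmp1 g) x y + (dx (cmp1 (g_eps g P1 chi e)) x y - dx (cmp1 g) x y)) with (dx (cmp1 (g_eps g P1 chi e)) x y) in HH by ring.
  replace (dy (cmp1 g) x y + (dy (cmp1 (g_eps g P1 chi e)) x y - dy (cmp1 g) x y)) with (dy (cmp1 (g_eps g P1 chi e)) x y) in HH by ring.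
  replace (dx (cmp2 g) x y + (dx (cmp2 (g_eps g P1 chi e)) x y - dx (cmp2 g) x y)) with (dx (cmp2 (g_eps g P1 chi e)) x y) in HH by ring.
  replace (dy (cmp2 g) x y + (dy (cmp2 (g_eps g P1 chi e)) x y - dy (cmp2 g) x y)) with (dy (cmp2 (g_eps g P1 chi e)) x y) in HH by ring.
  exact HH.
Qed.
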